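(* Let $\alpha\in(0,1)$ and $F\in C^\infty(\mathbb{S}^1_{2\pi}\times(0,\infty))$. Let $(X,\nu)\in C([0,\infty);C^1(\mathbb{S}^1_{2\pi};\mathbb{R}^2\times\mathbb{S}^1))\cap C^\infty(\mathbb{S}^1_{2\pi}\times(0,\infty);\mathbb{R}^2\times\mathbb{S}^1)$ be an inverse curvature flow starting from $(X_0,\nu_0)\in C^{1+\alpha}(\mathbb{S}^1_{2\pi};\mathbb{R}^2\times\mathbb{S}^1)$, with $(X_0,\nu_0)$ $\ell$-convex, whose tangent velocity satisfies $T=\partial_u\beta/\ell^2 + F\beta$ on $\mathbb{S}^1_{2\pi}\times(0,\infty)$. Then there exist $n\in\mathbb{N}$ and $\phi\in C([0,\infty);C^1(\mathbb{S}^1_{2\pi};\mathbb{S}^1_{2\pi}))\cap C^\infty(\mathbb{S}^1_{2\pi}\times(0,\infty);\mathbb{S}^1_{2\pi})$ with $\phi(\cdot,0)=\phi_0$ a $C^1$-diffeomorphism belonging to $C^{1+\alpha}$, such that $\phi(\cdot,t)$ is a diffeomorphism of $\mathbb{S}^1_{2\pi}$ for every $t\ge0$ and the reparametrized flow $(\tilde X(u,t),\tilde\nu(u,t)) := (X(\phi(u,t),t),\nu(\phi(u,t),t))$ satisfies $$\tilde\nu(u,0)=(\sin(nu),-\cos(nu))^\top\ (u\in\mathbb{S}^1_{2\pi}),\qquad \partial_t\tilde X = \frac{\tilde\beta}{\tilde\ell}\tilde\nu + \frac{\partial_u\tilde\beta}{\tilde\ell^2}\tilde\mu\ \text{ on }\mathbb{S}^1_{2\pi}\times(0,\infty),$$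 where $\tilde\mu=J\tilde\nu$ and $(\tilde\ell,\tilde\beta)$ is the Legendre curvature of $(\tilde X,\tilde\nu)$.
   Context: $\mathbb{S}^1_{2\pi}=\mathbb{R}/2\pi\mathbb{Z}$, $\mathbb{S}^1$ the unit circle, $J$ anticlockwise rotation by $\pi/2$. A Legendre curve is a $C^1$ pair $(X,\nu):\mathbb{S}^1_{2\pi}\to\mathbb{R}^2\times\mathbb{S}^1$ with $\langle\partial_uX,\nu\rangle=0$; $\mu=J\nu$; Legendre curvature $\ell=\langle\partial_u\nu,\mu\rangle$, $\beta=\langle\partial_uX,\mu\rangle$; $\ell$-convex means $\ell>0$. A flow of Legendre curves has time slices that are Legendre curves; normal velocity $N=\langle\partial_tX,\nu\rangle$, tangent velocity $T=\langle\partial_tX,\mu\rangle$. An inverse curvature flow is a flow of Legendre curves, smooth for $t>0$, whose slices are $\ell$-convex for $t>0$ and with $N=\beta/\ell$ for $t>0$. *)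

(* Defs.v *)
From Stdlib Require Import Reals List.
From Coquelicot Require Import Coquelicot.
Open Scope R_scope.

(* Points of R^2 are pairs; the circle S^1_{2pi} = R/2piZ is represented by
   2pi-periodic functions of u : R.  Functions of (u,t) have type R -> R -> _. *)

Definition dot (a b : R * R) : R := fst a * fst b + snd a * snd b.
Definition vadd (a b : R * R) : R * R := (fst a + fst b, snd a + snd b).
Definition vscal (c : R) (a : R * R) : R * R := (c * fst a, c * snd a).
Definition Jrot (a : R * R) : R * R := (- snd a, fst a).

Definition du (f : R -> R -> R * R) (u t : R) : R * R :=
  (Derive (fun s => fst (f s t)) u, Derive (fun s => snd (f s t)) u).
Definition dt (f : R -> R -> R * R) (u t : R) : R * R :=
  (Derive (fun s => fst (f u s)) t, Derive (fun s => snd (f u s)) t).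

Definition ell (X nu : R -> R -> R * R) (u t : R) : R :=
  dot (du nu u t) (Jrot (nu u t)).
Definition beta (X nu : R -> R -> R * R) (u t : R) : R :=
  dot (du X u t) (Jrot (nu u t)).
Definition normal_vel (X nu : R -> R -> R * R) (u t : R) : R :=
  dot (dt X u t) (nu u t).
Definition tang_vel (X nu : R -> R -> R * R) (u t : R) : R :=
  dot (dt X u t) (Jrot (nu u t)).

Definition C1 (f : R -> R) : Prop :=
  (forall u, ex_derive f u) /\ (forall u, continuous (Derive f) u).

Definition C1alpha (alpha : R) (f : R -> R) : Prop :=
  C1 f /\ exists C : R, forall u v, u <> v ->
    Rabs (Derive f u - Derive f v) <= C * Rpower (Rabs (u - v)) alpha.

(* f in C([0,oo); C^1(S^1)) : every slice is C^1 and t |-> f(.,t) is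
   continuous for the C^1 (sup) norm *)
Definition C0_C1 (f : R -> R -> R) : Prop :=
  (forall t, 0 <= t -> C1 (fun u => f u t)) /\
  forall t0, 0 <= t0 -> forall eps, 0 < eps -> exists delta, 0 < delta /\
    forall t, 0 <= t -> Rabs (t - t0) < delta -> forall u,
      Rabs (f u t - f u t0) < eps /\
      Rabs (Derive (fun s => f s t) u - Derive (fun s => f s t0) u) < eps.

(* iterated partial derivatives: true = d/du, false = d/dt *)
Fixpoint dpart (l : list bool) (f : R -> R -> R) : R -> R -> R :=
  match l with
  | nil => f
  | b :: l' =>
      if b then fun u t => Derive (fun s => dpart l' f s t) u
      else fun u t => Derive (fun s => dpart l' f u s) t
  end.

Definition smooth_pos (f : R -> R -> R) : Prop :=
  forall (l : list bool) (u t : R), 0 < t ->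
    ex_derive (fun s => dpart l f s t) u /\
    ex_derive (fun s => dpart l f u s) t /\
    continuous (fun p : R * R => dpart l f (fst p) (snd p)) (u, t).

Definition periodic2 (f : R -> R -> R) : Prop :=
  forall u t, f (u + 2 * PI) t = f u t.

Definition C0_C1V (f : R -> R -> R * R) : Prop :=
  C0_C1 (fun u t => fst (f u t)) /\ C0_C1 (fun u t => snd (f u t)).
Definition smooth_posV (f : R -> R -> R * R) : Prop :=
  smooth_pos (fun u t => fst (f u t)) /\ smooth_pos (fun u t => snd (f u t)).
Definition C1alphaV (alpha : R) (f : R -> R * R) : Prop :=
  C1alpha alpha (fun u => fst (f u)) /\ C1alpha alpha (fun u => snd (f u)).
Definition periodic2V (f : R -> R -> R * R) : Prop :=
  forall u t, 0 <= t -> f (u + 2 * PI) t = f u t.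

Definition flow_regular (X nu : R -> R -> R * R) : Prop :=
  periodic2V X /\ periodic2V nu /\
  C0_C1V X /\ C0_C1V nu /\ smooth_posV X /\ smooth_posV nu.

Definition legendre_flow (X nu : R -> R -> R * R) : Prop :=
  forall u t, 0 <= t ->
    dot (nu u t) (nu u t) = 1 /\ dot (du X u t) (nu u t) = 0.

Definition inverse_curvature_flow (X nu : R -> R -> R * R) : Prop :=
  legendre_flow X nu /\
  (forall u t, 0 < t -> 0 < ell X nu u t) /\
  (forall u t, 0 < t -> normal_vel X nu u t = beta X nu u t / ell X nu u t).

(* Main.v *)
Require Import Defs.
From Stdlib Require Import Reals List.
From Coquelicot Require Import Coquelicot.
From Stdlib Require Import Lra Psatz ZArith FunctionalExtensionality ClassicalEpsilon.
Open Scope R_scope.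


Definition du1 (f : R -> R -> R) := fun u t => Derive (fun s => f s t) u.
Definition dt1 (f : R -> R -> R) := fun u t => Derive (fun s => f u s) t.
Definition cont2 (f : R -> R -> R) u t :=
  continuous (fun p : R * R => f (fst p) (snd p)) (u, t).

Lemma smooth_class (Q : (R -> R -> R) -> Prop) :
  (forall h, Q h -> forall u t, 0 < t ->
     ex_derive (fun s => h s t) u /\ ex_derive (fun s => h u s) t /\ cont2 h u t) ->
  (forall h, Q h -> Q (du1 h)) -> (forall h, Q h -> Q (dt1 h)) ->
  forall f, Q f -> smooth_pos f.
Proof.
  intros H1 H2 H3 f Hf l u t ht.
  assert (Q (dpart l f)).
  { induction l as [|b l IH]; simpl; auto. destruct b; [apply H2|apply H3]; auto. }
  apply H1; auto.
Qed.

Lemma locally_pos t : 0 < t -> locally t (fun s => 0 < s).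
Proof.
  intros ht. exists (mkposreal t ht). intros s Hs.
  unfold ball in Hs; simpl in Hs; unfold AbsRing_ball, abs, minus, plus, opp in Hs; simpl in Hs.
  apply Rabs_lt_between' in Hs. lra.
Qed.

Lemma locally2_pos u t : 0 < t -> locally (u, t) (fun p : R * R => 0 < snd p).
Proof.
  intros ht. exists (mkposreal t ht). intros [a b] [_ Hb]. simpl in *.
  unfold ball in Hb; simpl in Hb; unfold AbsRing_ball, abs, minus, plus, opp in Hb; simpl in Hb.
  apply Rabs_lt_between' in Hb. lra.
Qed.

Lemma dpart_app l l0 f : dpart l (dpart l0 f) = dpart (l ++ l0) f.
Proof. induction l as [|b l IH]; simpl; auto. rewrite IH. auto. Qed.

Lemma smooth_dpart l0 f : smooth_pos f -> smooth_pos (dpart l0 f).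
Proof. intros Hf l u t ht. rewrite dpart_app. apply Hf; auto. Qed.

Lemma smooth_du f : smooth_pos f -> smooth_pos (du1 f).
Proof. intros; apply (smooth_dpart (true :: nil)); auto. Qed.
Lemma smooth_dt f : smooth_pos f -> smooth_pos (dt1 f).
Proof. intros; apply (smooth_dpart (false :: nil)); auto. Qed.

Lemma smooth_ext f g : smooth_pos f -> (forall u t, 0 < t -> f u t = g u t) -> smooth_pos g.
Proof.
  intros Hf Hfg.
  apply (smooth_class (fun h => exists f, smooth_pos f /\ forall u t, 0 < t -> f u t = h u t)).
  - intros h [f' [Hf' E]] u t ht. destruct (Hf' nil u t ht) as [A [B C]]; simpl in *.
    split; [|split].
    + apply ex_derive_ext with (2 := A). intros; apply E; auto.
    + apply ex_derive_ext_loc with (2 := B).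
      generalize (locally_pos t ht). apply filter_imp. intros; apply E; auto.
    + unfold cont2. apply continuous_ext_loc with (2 := C).
      generalize (locally2_pos u t ht). apply filter_imp. intros [a b]; simpl; intros; apply E; auto.
  - intros h [f' [Hf' E]]. exists (du1 f'). split.
    + apply smooth_du; auto.
    + intros u t ht. unfold du1. apply Derive_ext. intros; apply E; auto.
  - intros h [f' [Hf' E]]. exists (dt1 f'). split.
    + apply smooth_dt; auto.
    + intros u t ht. unfold dt1. apply Derive_ext_loc.
      generalize (locally_pos t ht). apply filter_imp. intros; apply E; auto.
  - exists f; auto.
Qed.

Inductive ex := At (f : R -> R -> R) | Cst (c : R) | Add (a b : ex) | Mul (a b : ex) | Inv (a : ex).

Fixpoint ev (e : ex) : R -> R -> R :=
  match e with
  | At f => f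
  | Cst c => fun _ _ => c
  | Add a b => fun u t => ev a u t + ev b u t
  | Mul a b => fun u t => ev a u t * ev b u t
  | Inv a => fun u t => / ev a u t
  end.

Fixpoint dU (e : ex) : ex :=
  match e with
  | At f => At (du1 f)
  | Cst _ => Cst 0
  | Add a b => Add (dU a) (dU b)
  | Mul a b => Add (Mul (dU a) b) (Mul a (dU b))
  | Inv a => Mul (Cst (-1)) (Mul (dU a) (Mul (Inv a) (Inv a)))
  end.

Fixpoint dT (e : ex) : ex :=
  match e with
  | At f => At (dt1 f)
  | Cst _ => Cst 0
  | Add a b => Add (dT a) (dT b)
  | Mul a b => Add (Mul (dT a) b) (Mul a (dT b))
  | Inv a => Mul (Cst (-1)) (Mul (dT a) (Mul (Inv a) (Inv a)))
  end.

Fixpoint wf (e : ex) : Prop :=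
  match e with
  | At f => smooth_pos f
  | Cst _ => True
  | Add a b => wf a /\ wf b
  | Mul a b => wf a /\ wf b
  | Inv a => wf a /\ forall u t, 0 < t -> ev a u t <> 0
  end.

Lemma wf_dU e : wf e -> wf (dU e).
Proof.
  induction e; simpl; intuition.
  apply smooth_du; auto.
Qed.
Lemma wf_dT e : wf e -> wf (dT e).
Proof.
  induction e; simpl; intuition.
  apply smooth_dt; auto.
Qed.

Lemma cont2_plus f g u t : cont2 f u t -> cont2 g u t -> cont2 (fun a b => f a b + g a b) u t.
Proof. intros; apply (continuous_plus (fun p:R*R => f (fst p) (snd p)) (fun p => g (fst p) (snd p))); auto. Qed.
Lemma cont2_mult f g u t : cont2 f u t -> cont2 g u t -> cont2 (fun a b => f a b * g a b) u t.
Proof. intros; apply (continuous_mult (fun p:R*R => f (fst p) (snd p)) (fun p => g (fst p) (snd p))); auto. Qed.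

Lemma ev_props e : wf e -> forall u t, 0 < t ->
  is_derive (fun s => ev e s t) u (ev (dU e) u t) /\
  is_derive (fun s => ev e u s) t (ev (dT e) u t) /\ cont2 (ev e) u t.
Proof.
  induction e; simpl; intros Hw u t ht.
  - destruct (Hw nil u t ht) as [A [B C]]; simpl in *.
    split; [|split]; auto; apply Derive_correct; auto.
  - split; [|split].
    + apply (is_derive_const (K:=R_AbsRing) (V:=R_NormedModule) c u).
    + apply (is_derive_const (K:=R_AbsRing) (V:=R_NormedModule) c t).
    + apply continuous_const.
  - destruct Hw as [Ha Hb]. destruct (IHe1 Ha u t ht) as [A1 [B1 C1]].
    destruct (IHe2 Hb u t ht) as [A2 [B2 C2]].
    split; [|split].
    + apply is_derive_Reals. apply is_derive_Reals in A1. apply is_derive_Reals in A2.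
      apply (derivable_pt_lim_plus (fun s => ev e1 s t) (fun s => ev e2 s t)); auto.
    + apply is_derive_Reals. apply is_derive_Reals in B1. apply is_derive_Reals in B2.
      apply (derivable_pt_lim_plus (fun s => ev e1 u s) (fun s => ev e2 u s)); auto.
    + apply cont2_plus; auto.
  - destruct Hw as [Ha Hb]. destruct (IHe1 Ha u t ht) as [A1 [B1 C1]].
    destruct (IHe2 Hb u t ht) as [A2 [B2 C2]].
    split; [|split].
    + apply is_derive_Reals. apply is_derive_Reals in A1. apply is_derive_Reals in A2.
      apply (derivable_pt_lim_mult (fun s => ev e1 s t) (fun s => ev e2 s t)); auto.
    + apply is_derive_Reals. apply is_derive_Reals in B1. apply is_derive_Reals in B2.
      apply (derivable_pt_lim_mult (fun s => ev e1 u s) (fun s => ev e2 u s)); auto.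
    + apply cont2_mult; auto.
  - destruct Hw as [Ha Hnz]. destruct (IHe Ha u t ht) as [A1 [B1 C1]].
    specialize (Hnz u t ht).
    split; [|split].
    + replace (-1 * (ev (dU e) u t * (/ ev e u t * / ev e u t))) with (- ev (dU e) u t / ev e u t ^ 2).
      apply (is_derive_inv (fun s => ev e s t)); auto. field; auto.
    + replace (-1 * (ev (dT e) u t * (/ ev e u t * / ev e u t))) with (- ev (dT e) u t / ev e u t ^ 2).
      apply (is_derive_inv (fun s => ev e u s)); auto. field; auto.
    + unfold cont2 in *. apply (continuous_comp (fun p : R * R => ev e (fst p) (snd p)) (fun x => / x)); auto.
      apply continuous_Rinv; auto.
Qed.

Lemma smooth_ev e : wf e -> smooth_pos (ev e).
Proof.
  intros Hw.
  apply (smooth_class (fun h => exists e, wf e /\ forall u t, 0 < t -> ev e u t = h u t)).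
  - intros h [e' [Hw' E]] u t ht. destruct (ev_props e' Hw' u t ht) as [A [B C]].
    split; [|split].
    + apply ex_derive_ext with (fun s => ev e' s t). intros; apply E; auto. eexists; eauto.
    + apply ex_derive_ext_loc with (fun s => ev e' u s).
      generalize (locally_pos t ht). apply filter_imp. intros; apply E; auto. eexists; eauto.
    + unfold cont2. apply continuous_ext_loc with (2 := C).
      generalize (locally2_pos u t ht). apply filter_imp. intros [a b]; simpl; intros; apply E; auto.
  - intros h [e' [Hw' E]]. exists (dU e'). split. apply wf_dU; auto.
    intros u t ht. destruct (ev_props e' Hw' u t ht) as [A [B C]].
    unfold du1. rewrite <- (is_derive_unique _ _ _ A). apply Derive_ext. intros; apply E; auto.
  - intros h [e' [Hw' E]]. exists (dT e'). split. apply wf_dT; auto.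
    intros u t ht. destruct (ev_props e' Hw' u t ht) as [A [B C]].
    unfold dt1. rewrite <- (is_derive_unique _ _ _ B). apply Derive_ext_loc.
    generalize (locally_pos t ht). apply filter_imp. intros; apply E; auto.
  - exists e; auto.
Qed.

Lemma cont2_2d f u t : cont2 f u t -> continuity_2d_pt f u t.
Proof. intros H. apply continuity_2d_pt_filterlim. exact H. Qed.

Lemma cont_pt_of_deriv (g : R -> R) x : ex_derive g x -> continuity_pt g x.
Proof. intros H. apply continuity_pt_filterlim. apply (ex_derive_continuous (K:=R_AbsRing) (V:=R_NormedModule)); auto. Qed.

Lemma smooth_diff f u t : smooth_pos f -> 0 < t ->
  differentiable_pt_lim f u t (du1 f u t) (dt1 f u t).
Proof.
  intros Hf ht eps.
  assert (He2 : 0 < eps / 2) by (destruct eps; simpl; lra).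
  destruct (Hf (true :: nil) u t ht) as [_ [_ C1]].
  destruct (Hf (false :: nil) u t ht) as [_ [_ C2]].
  apply cont2_2d in C1. apply cont2_2d in C2.
  destruct (C1 (mkposreal _ He2)) as [d1 H1].
  destruct (C2 (mkposreal _ He2)) as [d2 H2].
  assert (Hd : 0 < Rmin (Rmin d1 d2) t).
  { apply Rmin_pos; [apply Rmin_pos|]; [destruct d1|destruct d2|]; simpl; auto. }
  exists (mkposreal _ Hd). intros a b Ha Hb. simpl in Ha, Hb.
  assert (Ha1 : Rabs (a - u) < d1) by (eapply Rlt_le_trans; [apply Ha|]; eapply Rle_trans; apply Rmin_l).
  assert (Hb1 : Rabs (b - t) < d1) by (eapply Rlt_le_trans; [apply Hb|]; eapply Rle_trans; apply Rmin_l).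
  assert (Hb2 : Rabs (b - t) < d2) by (eapply Rlt_le_trans; [apply Hb|]; eapply Rle_trans; [apply Rmin_l|apply Rmin_r]).
  assert (Hbt : Rabs (b - t) < t) by (eapply Rlt_le_trans; [apply Hb|]; apply Rmin_r).
  assert (hb : 0 < b) by (apply Rabs_lt_between' in Hbt; lra).
  destruct (MVT_gen (fun s => f s b) u a (fun s => du1 f s b)) as [c [Hc Ec]].
  { intros x _. apply Derive_correct. destruct (Hf nil x b hb) as [A _]; exact A. }
  { intros x _. apply cont_pt_of_deriv. destruct (Hf nil x b hb) as [A _]; exact A. }
  destruct (MVT_gen (fun s => f u s) t b (dt1 f u)) as [c' [Hc' Ec']].
  { intros x Hx. apply Derive_correct. assert (0 < x).
    { destruct Hx as [Hx _]. unfold Rmin in Hx. destruct (Rle_dec t b); lra. }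
    destruct (Hf nil u x H) as [_ [A _]]; exact A. }
  { intros x Hx. apply cont_pt_of_deriv. assert (0 < x).
    { destruct Hx as [Hx _]. unfold Rmin in Hx. destruct (Rle_dec t b); lra. }
    destruct (Hf nil u x H) as [_ [A _]]; exact A. }
  simpl in Ec, Ec'.
  assert (Hcu : Rabs (c - u) < d1).
  { eapply Rle_lt_trans; [|apply Ha1]. unfold Rmin, Rmax in Hc. destruct (Rle_dec u a);
    unfold Rabs; destruct (Rcase_abs (c - u)); destruct (Rcase_abs (a - u)); lra. }
  assert (Hcb : Rabs (c' - t) < d2).
  { eapply Rle_lt_trans; [|apply Hb2]. unfold Rmin, Rmax in Hc'. destruct (Rle_dec t b);
    unfold Rabs; destruct (Rcase_abs (c' - t)); destruct (Rcase_abs (b - t)); lra. }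
  specialize (H1 c b Hcu Hb1). specialize (H2 u c' ltac:(rewrite Rminus_eq_0, Rabs_R0; destruct d2; auto) Hcb).
  simpl in H1, H2.
  replace (f a b - f u t - (du1 f u t * (a - u) + dt1 f u t * (b - t))) with
    ((du1 f c b - du1 f u t) * (a - u) + (dt1 f u c' - dt1 f u t) * (b - t)) by
    (replace (f a b - f u t) with ((f a b - f u b) + (f u b - f u t)) by ring; rewrite Ec, Ec'; ring).
  eapply Rle_trans; [apply Rabs_triang|]. rewrite !Rabs_mult.
  assert (Rabs (a - u) <= Rmax (Rabs (a - u)) (Rabs (b - t))) by apply Rmax_l.
  assert (Rabs (b - t) <= Rmax (Rabs (a - u)) (Rabs (b - t))) by apply Rmax_r.
  assert (0 <= Rabs (a - u)) by apply Rabs_pos. assert (0 <= Rabs (b - t)) by apply Rabs_pos.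
  assert (0 <= Rabs (du1 f c b - du1 f u t)) by apply Rabs_pos.
  assert (0 <= Rabs (dt1 f u c' - dt1 f u t)) by apply Rabs_pos.
  apply Rle_trans with (eps/2 * Rabs(a-u) + eps/2 * Rabs(b-t)).
  { apply Rplus_le_compat; apply Rmult_le_compat_r; auto; left; auto. }
  destruct eps as [e he]; simpl in *.
  assert (e/2 * Rabs (a - u) <= e/2 * Rmax (Rabs (a - u)) (Rabs (b - t))) by (apply Rmult_le_compat_l; lra).
  assert (e/2 * Rabs (b - t) <= e/2 * Rmax (Rabs (a - u)) (Rabs (b - t))) by (apply Rmult_le_compat_l; lra).
  lra.
Qed.


Lemma reduce2pi x : exists (k : Z) y, x = y + 2 * PI * IZR k /\ 0 <= y < 2 * PI.
Proof.
  assert (HP : 0 < 2 * PI) by (generalize PI_RGT_0; lra).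
  destruct (archimed (x / (2 * PI))) as [H1 H2].
  exists (up (x / (2 * PI)) - 1)%Z. exists (x - 2 * PI * IZR (up (x / (2 * PI)) - 1)).
  split; [ring|]. rewrite minus_IZR.
  set (k := IZR (up (x / (2 * PI)))) in *.
  assert (x = 2 * PI * (x / (2 * PI))) by (field; lra).
  split; nra.
Qed.

Lemma periodic_Z (g : R -> R) (p : R) : (forall z, g (z + p) = g z) ->
  forall (k : Z) y, g (y + p * IZR k) = g y.
Proof.
  intros Hg.
  assert (Hn : forall (m : nat) y, g (y + p * INR m) = g y).
  { induction m; intros y. simpl. rewrite Rmult_0_r, Rplus_0_r; auto.
    rewrite S_INR. replace (y + p * (INR m + 1)) with ((y + p * INR m) + p) by ring.
    rewrite Hg; auto. }
  intros k y. destruct k as [|q|q].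
  - simpl. rewrite Rmult_0_r, Rplus_0_r; auto.
  - rewrite <- positive_nat_Z, <- INR_IZR_INZ. apply Hn.
  - rewrite <- Pos2Z.opp_pos, opp_IZR, <- positive_nat_Z, <- INR_IZR_INZ.
    rewrite <- (Hn (Pos.to_nat q) (y + p * - INR (Pos.to_nat q))). f_equal. ring.
Qed.

Lemma periodic_reduce (g : R -> R) : (forall z, g (z + 2 * PI) = g z) ->
  forall x, exists y, 0 <= y <= 2 * PI /\ g x = g y.
Proof.
  intros Hg x. destruct (reduce2pi x) as [k [y [E Hy]]].
  exists y. split; [lra|]. rewrite E. apply periodic_Z; auto.
Qed.

Lemma sincos_eq a b : sin a = sin b -> cos a = cos b ->
  exists k : Z, a = b + 2 * PI * IZR k.
Proof.
  intros Hs Hc.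
  assert (Hs0 : sin (a - b) = 0) by (rewrite sin_minus, Hs, Hc; ring).
  assert (Hc1 : cos (a - b) = 1).
  { rewrite cos_minus, Hs, Hc. rewrite Rplus_comm. rewrite <- (sin2_cos2 b). unfold Rsqr. ring. }
  destruct (reduce2pi (a - b)) as [k [y [E Hy]]].
  assert (Hsy : sin y = 0).
  { rewrite <- (periodic_Z sin (2 * PI)) with (k := k). rewrite <- E; auto.
    intros z. rewrite sin_plus, sin_2PI, cos_2PI. ring. }
  assert (Hcy : cos y = 1).
  { rewrite <- (periodic_Z cos (2 * PI)) with (k := k). rewrite <- E; auto.
    intros z. rewrite cos_plus, sin_2PI, cos_2PI. ring. }
  destruct (sin_eq_0_0 y Hsy) as [j Ej].
  assert (HP := PI_RGT_0).
  assert (j = 0%Z \/ j = 1%Z).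
  { assert (0 <= IZR j) by (apply Rmult_le_reg_r with PI; lra).
    assert (IZR j < 2) by (apply Rmult_lt_reg_r with PI; lra).
    apply le_IZR in H. apply lt_IZR in H0. lia. }
  destruct H; subst j.
  - simpl in Ej. rewrite Rmult_0_l in Ej. subst y. exists k. lra.
  - simpl in Ej. rewrite Rmult_1_l in Ej. subst y. rewrite cos_PI in Hcy. lra.
Qed.

Lemma angle_exists a b : a * a + b * b = 1 -> exists th, sin th = a /\ - cos th = b.
Proof.
  intros H.
  assert (Ha : -1 <= a <= 1) by (split; nra).
  assert (Hc : cos (asin a) = Rabs b).
  { rewrite cos_asin; auto. rewrite <- sqrt_Rsqr_abs. f_equal. unfold Rsqr. lra. }
  destruct (Rle_dec b 0).
  - exists (asin a). split. apply sin_asin; auto. rewrite Hc, Rabs_left1; lra.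
  - exists (PI - asin a). split. rewrite sin_PI_x. apply sin_asin; auto.
    rewrite Rtrigo_facts.cos_pi_minus, Hc, Rabs_right; lra.
Qed.


Lemma implicit_deriv (K : R -> R -> R) (g : R -> R) y0 kx ky :
  differentiable_pt_lim K (g y0) y0 kx ky -> kx <> 0 -> continuity_pt g y0 ->
  locally y0 (fun y => K (g y) y = K (g y0) y0) ->
  derivable_pt_lim g y0 (- ky / kx).
Proof.
  intros HK Hkx Hg [d3 Hloc] eps Heps.
  set (a := Rabs kx). set (b := Rabs ky).
  assert (Ha : 0 < a) by (apply Rabs_pos_lt; auto).
  assert (Hb : 0 <= b) by apply Rabs_pos.
  set (C := 2 * b / a + 1).
  assert (HC : 1 <= C) by (unfold C; assert (0 <= 2 * b / a) by (apply Rmult_le_pos; [lra|left; apply Rinv_0_lt_compat; auto]); lra).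
  set (e' := Rmin (a / 2) (eps * a / (2 * (C + 1)))).
  assert (He' : 0 < e').
  { apply Rmin_pos. lra. apply Rmult_lt_0_compat. nra. apply Rinv_0_lt_compat; lra. }
  destruct (HK (mkposreal _ He')) as [d1 H1]. simpl in H1.
  destruct (Hg d1 (cond_pos d1)) as [d2 [Hd2 H2]].
  assert (Hd : 0 < Rmin (Rmin d1 d2) d3).
  { apply Rmin_pos; [apply Rmin_pos|]; [destruct d1|auto|destruct d3]; simpl; auto. }
  exists (mkposreal _ Hd). intros h Hh0 Hh. simpl in Hh.
  assert (Hh1 : Rabs h < d1) by (eapply Rlt_le_trans; [apply Hh|]; eapply Rle_trans; apply Rmin_l).
  assert (Hh2 : Rabs h < d2) by (eapply Rlt_le_trans; [apply Hh|]; eapply Rle_trans; [apply Rmin_l|apply Rmin_r]).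
  assert (Hh3 : Rabs h < d3) by (eapply Rlt_le_trans; [apply Hh|]; apply Rmin_r).
  set (D := g (y0 + h) - g y0).
  assert (HD : Rabs D < d1).
  { unfold D. destruct (Req_dec h 0) as [E|E]; [contradiction|].
    apply (H2 (y0 + h)). split. unfold D_x, no_cond; split; auto. lra.
    simpl; unfold R_dist. replace (y0 + h - y0) with h by ring. auto. }
  assert (Hz : K (g (y0 + h)) (y0 + h) = K (g y0) y0).
  { apply Hloc. unfold ball; simpl; unfold AbsRing_ball, abs, minus, plus, opp; simpl.
    replace (y0 + h + - y0) with h by ring. auto. }
  specialize (H1 (g (y0 + h)) (y0 + h)).
  replace (g (y0 + h) - g y0) with D in H1 by reflexivity.
  replace (y0 + h - y0) with h in H1 by ring.
  specialize (H1 HD Hh1). rewrite Hz in H1.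
  replace (K (g y0) y0 - K (g y0) y0 - (kx * D + ky * h)) with (- (kx * D + ky * h)) in H1 by ring.
  rewrite Rabs_Ropp in H1.
  assert (Hm : Rmax (Rabs D) (Rabs h) <= Rabs D + Rabs h).
  { unfold Rmax; destruct (Rle_dec (Rabs D) (Rabs h)); generalize (Rabs_pos D) (Rabs_pos h); lra. }
  assert (He'1 : e' <= a / 2) by apply Rmin_l.
  assert (He'2 : e' <= eps * a / (2 * (C + 1))) by apply Rmin_r.
  assert (Hbound : Rabs (kx * D + ky * h) <= e' * (Rabs D + Rabs h)).
  { eapply Rle_trans; [apply H1|]. apply Rmult_le_compat_l; lra. }
  assert (HaD : a * Rabs D <= b * Rabs h + e' * (Rabs D + Rabs h)).
  { assert (E1 : a * Rabs D = Rabs (kx * D)) by (unfold a; rewrite Rabs_mult; auto).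
    assert (E2 : b * Rabs h = Rabs (ky * h)) by (unfold b; rewrite Rabs_mult; auto).
    rewrite E1, E2.
    replace (kx * D) with ((kx * D + ky * h) + - (ky * h)) by ring.
    eapply Rle_trans; [apply Rabs_triang|]. rewrite Rabs_Ropp. lra. }
  assert (HDC : Rabs D <= C * Rabs h).
  { assert (0 <= Rabs D) by apply Rabs_pos. assert (0 <= Rabs h) by apply Rabs_pos.
    assert (e' * Rabs D <= a / 2 * Rabs D) by (apply Rmult_le_compat_r; lra).
    assert (e' * Rabs h <= a / 2 * Rabs h) by (apply Rmult_le_compat_r; lra).
    assert (a / 2 * Rabs D <= b * Rabs h + a / 2 * Rabs h) by lra.
    unfold C. apply Rmult_le_reg_l with (a / 2). lra.
    replace (a / 2 * ((2 * b / a + 1) * Rabs h)) with (b * Rabs h + a / 2 * Rabs h) by (field; lra). lra. }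
  assert (Hhpos : 0 < Rabs h) by (apply Rabs_pos_lt; auto).
  replace (D / h - - ky / kx) with ((kx * D + ky * h) / (kx * h)) by (field; auto).
  unfold Rdiv. rewrite Rabs_mult, Rabs_inv, Rabs_mult. fold a.
  apply Rle_lt_trans with (e' * (C + 1) * Rabs h * / (a * Rabs h)).
  { apply Rmult_le_compat_r. left; apply Rinv_0_lt_compat; nra.
    eapply Rle_trans; [apply Hbound|]. assert (0 <= e') by lra. nra. }
  replace (e' * (C + 1) * Rabs h * / (a * Rabs h)) with (e' * (C + 1) / a) by (field; lra).
  apply Rle_lt_trans with (eps / 2); [|lra].
  apply Rmult_le_reg_r with a; auto. unfold Rdiv at 1. rewrite Rmult_assoc, Rinv_l, Rmult_1_r by lra.
  apply Rle_trans with (eps * a / (2 * (C + 1)) * (C + 1)).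
  apply Rmult_le_compat_r; lra. right; field; lra.
Qed.


Lemma W_deriv (a b c : R -> R) w x :
  is_derive a x (- w * b x) -> is_derive b x (w * a x) -> is_derive c x w ->
  is_derive (fun s => a s * sin (c s) - b s * cos (c s)) x 0 /\
  is_derive (fun s => a s * cos (c s) + b s * sin (c s)) x 0.
Proof.
  intros Ha Hb Hc.
  split.
  - auto_derive.
    + repeat split; eexists; eauto.
    + replace (Derive (fun x : R => a x) x) with (- w * b x) by (symmetry; apply is_derive_unique; exact Ha).
      replace (Derive (fun x : R => b x) x) with (w * a x) by (symmetry; apply is_derive_unique; exact Hb).
      replace (Derive (fun x : R => c x) x) with w by (symmetry; apply is_derive_unique; exact Hc). ring.
  - auto_derive.
    + repeat split; eexists; eauto.
    + replace (Derive (fun x : R => a x) x) with (- w * b x) by (symmetry; apply is_derive_unique; exact Ha).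
      replace (Derive (fun x : R => b x) x) with (w * a x) by (symmetry; apply is_derive_unique; exact Hb).
      replace (Derive (fun x : R => c x) x) with w by (symmetry; apply is_derive_unique; exact Hc). ring.
Qed.

Lemma const_on (f : R -> R) x y : (forall s, Rmin x y <= s <= Rmax x y -> is_derive f s 0) -> f x = f y.
Proof.
  intros H. destruct (MVT_gen f y x (fun _ => 0)) as [c [_ E]].
  - intros s Hs. apply H. rewrite Rmin_comm, Rmax_comm. lra.
  - intros s Hs. apply continuity_pt_filterlim.
    apply (ex_derive_continuous (K:=R_AbsRing) (V:=R_NormedModule)). eexists; apply H.
    rewrite Rmin_comm, Rmax_comm. auto.
  - lra.
Qed.

Lemma rot_unique (a b c w : R -> R) x y :
  (forall s, Rmin x y <= s <= Rmax x y ->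
     is_derive a s (- w s * b s) /\ is_derive b s (w s * a s) /\ is_derive c s (w s)) ->
  a y = sin (c y) -> b y = - cos (c y) -> a x = sin (c x) /\ b x = - cos (c x).
Proof.
  intros H Ay By.
  assert (E1 : (fun s => a s * sin (c s) - b s * cos (c s)) x = (fun s => a s * sin (c s) - b s * cos (c s)) y).
  { apply (const_on (fun s => a s * sin (c s) - b s * cos (c s))). intros s Hs. destruct (H s Hs) as [H1 [H2 H3]]. apply (W_deriv a b c (w s) s H1 H2 H3). }
  assert (E2 : (fun s => a s * cos (c s) + b s * sin (c s)) x = (fun s => a s * cos (c s) + b s * sin (c s)) y).
  { apply (const_on (fun s => a s * cos (c s) + b s * sin (c s))). intros s Hs. destruct (H s Hs) as [H1 [H2 H3]]. apply (W_deriv a b c (w s) s H1 H2 H3). }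
  simpl in E1, E2. rewrite Ay, By in E1, E2.
  assert (S1 := sin2_cos2 (c y)). assert (S2 := sin2_cos2 (c x)). unfold Rsqr in S1, S2.
  assert (F1 : a x * sin (c x) - b x * cos (c x) = 1) by (rewrite E1; lra).
  assert (F2 : a x * cos (c x) + b x * sin (c x) = 0) by (rewrite E2; lra).
  split.
  - replace (a x) with (sin (c x) * (a x * sin (c x) - b x * cos (c x)) + cos (c x) * (a x * cos (c x) + b x * sin (c x)))
      by (replace (a x) with (a x * (sin (c x) * sin (c x) + cos (c x) * cos (c x))) at 3 by (rewrite S2; ring); ring).
    rewrite F1, F2. ring.
  - replace (b x) with (- cos (c x) * (a x * sin (c x) - b x * cos (c x)) + sin (c x) * (a x * cos (c x) + b x * sin (c x)))
      by (replace (b x) with (b x * (sin (c x) * sin (c x) + cos (c x) * cos (c x))) at 3 by (rewrite S2; ring); ring).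
    rewrite F1, F2. ring.
Qed.

Lemma unit_orth (a b : R -> R) x da db :
  locally x (fun s => a s * a s + b s * b s = 1) -> is_derive a x da -> is_derive b x db ->
  da * a x + db * b x = 0.
Proof.
  intros Hl Ha Hb.
  assert (H : is_derive (fun s => a s * a s + b s * b s) x (da * a x + a x * da + (db * b x + b x * db))).
  { apply is_derive_Reals. apply is_derive_Reals in Ha. apply is_derive_Reals in Hb.
    apply (derivable_pt_lim_plus (fun s => a s * a s) (fun s => b s * b s));
    apply (derivable_pt_lim_mult); auto. }
  assert (H0 : is_derive (fun s => a s * a s + b s * b s) x 0).
  { apply is_derive_ext_loc with (fun _ => 1).
    apply filter_imp with (2 := Hl). intros s E; rewrite E; auto.
    apply (is_derive_const (K:=R_AbsRing) (V:=R_NormedModule)). }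
  assert (U := is_derive_unique _ _ _ H). rewrite (is_derive_unique _ _ _ H0) in U. lra.
Qed.

Lemma unit_decomp a b da db : a * a + b * b = 1 -> da * a + db * b = 0 ->
  da = - (da * - b + db * a) * b /\ db = (da * - b + db * a) * a.
Proof.
  intros H1 H2. split.
  - assert (a * (da * a + db * b) = 0) by (rewrite H2; ring).
    assert (da * (a * a + b * b) = da) by (rewrite H1; ring). nra.
  - assert (b * (da * a + db * b) = 0) by (rewrite H2; ring).
    assert (db * (a * a + b * b) = db) by (rewrite H1; ring). nra.
Qed.

Lemma no_cross (g : R -> R) x y v :
  (forall s, Rmin x y <= s <= Rmax x y -> continuity_pt g s /\ g s <> v) ->
  g x < v -> g y < v.
Proof.
  intros H Hx. destruct (Rlt_le_dec (g y) v) as [|Hy]; auto. exfalso.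
  assert (Hyv : g y <> v) by (apply H; unfold Rmin, Rmax; destruct (Rle_dec x y); lra).
  assert (Hy' : v < g y) by lra.
  destruct (Rtotal_order x y) as [Hxy|[Hxy|Hxy]].
  - destruct (Ranalysis5.IVT_interv (fun s => g s - v) x y) as [z [Hz Ez]]; auto.
    + intros a Ha. apply (continuity_pt_minus g (fun _ => v)). apply H. unfold Rmin, Rmax; destruct (Rle_dec x y); lra.
      apply continuity_pt_const. intros ? ?; auto.
    + lra. + lra.
    + apply (H z). unfold Rmin, Rmax; destruct (Rle_dec x y); lra. lra.
  - subst; lra.
  - destruct (Ranalysis5.IVT_interv (fun s => v - g s) y x) as [z [Hz Ez]]; auto.
    + intros a Ha. apply (continuity_pt_minus (fun _ => v) g). apply continuity_pt_const. intros ? ?; auto.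
      apply H. unfold Rmin, Rmax; destruct (Rle_dec x y); lra.
    + lra. + lra.
    + apply (H z). unfold Rmin, Rmax; destruct (Rle_dec x y); lra. lra.
Qed.

Lemma no_cross_gt (g : R -> R) x y v :
  (forall s, Rmin x y <= s <= Rmax x y -> continuity_pt g s /\ g s <> v) ->
  v < g x -> v < g y.
Proof.
  intros H Hx. assert (- g y < - v); [|lra].
  apply (no_cross (fun s => - g s) x y (- v)); [|lra].
  intros s Hs. destruct (H s Hs) as [A B]. split. apply (continuity_pt_opp g); auto. lra.
Qed.

Lemma rpow_small z a : 0 < z <= 1 -> 0 < a <= 1 -> z <= Rpower z a.
Proof.
  intros Hz Ha. unfold Rpower. rewrite <- (exp_ln z) at 1 by lra.
  assert (ln z <= 0) by (rewrite <- ln_1; apply ln_le; lra).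
  destruct (Req_dec (ln z) (a * ln z)) as [E|E]. rewrite <- E; lra.
  left. apply exp_increasing. nra.
Qed.

Lemma rpow_big z a : 1 <= z -> 0 <= a -> 1 <= Rpower z a.
Proof. intros Hz Ha. rewrite <- (Rpower_O z) by lra. apply Rle_Rpower; auto. Qed.

Lemma rpow_pos z a : 0 < Rpower z a.
Proof. unfold Rpower. apply exp_pos. Qed.

Lemma holder_of_lip_bdd (f : R -> R) M a : 0 < a <= 1 -> 0 <= M ->
  (forall x y, Rabs (f x - f y) <= M * Rabs (x - y)) ->
  (forall x y, Rabs (f x - f y) <= 2) ->
  forall x y, x <> y -> Rabs (f x - f y) <= (M + 2) * Rpower (Rabs (x - y)) a.
Proof.
  intros Ha HM H1 H2 x y Hxy.
  assert (Hp : 0 < Rabs (x - y)) by (apply Rabs_pos_lt; lra).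
  assert (0 < Rpower (Rabs (x - y)) a) by apply rpow_pos.
  destruct (Rle_dec (Rabs (x - y)) 1).
  - assert (Rabs (x - y) <= Rpower (Rabs (x - y)) a) by (apply rpow_small; lra).
    eapply Rle_trans. apply H1. nra.
  - assert (1 <= Rpower (Rabs (x - y)) a) by (apply rpow_big; lra).
    eapply Rle_trans. apply H2. nra.
Qed.


Section Lift.
Variable nu : R -> R -> R * R.
Definition n1 u t := fst (nu u t).
Definition n2 u t := snd (nu u t).
Definition ellf u t := du1 n1 u t * - n2 u t + du1 n2 u t * n1 u t.
Hypothesis Hper : forall u t, 0 <= t -> nu (u + 2 * PI) t = nu u t.
Hypothesis HC1 : C0_C1 n1.
Hypothesis HC2 : C0_C1 n2.
Hypothesis HS1 : smooth_pos n1.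
Hypothesis HS2 : smooth_pos n2.
Hypothesis Hunit : forall u t, 0 <= t -> n1 u t * n1 u t + n2 u t * n2 u t = 1.
Hypothesis Hpos : forall u t, 0 <= t -> 0 < ellf u t.

Lemma ex_n1 x t : 0 <= t -> ex_derive (fun s => n1 s t) x.
Proof. intros ht. destruct HC1 as [H _]. destruct (H t ht) as [A _]. apply A. Qed.
Lemma ex_n2 x t : 0 <= t -> ex_derive (fun s => n2 s t) x.
Proof. intros ht. destruct HC2 as [H _]. destruct (H t ht) as [A _]. apply A. Qed.
Lemma cont_dn1 x t : 0 <= t -> continuous (fun s => du1 n1 s t) x.
Proof. intros ht. destruct HC1 as [H _]. destruct (H t ht) as [_ A]. apply A. Qed.
Lemma cont_dn2 x t : 0 <= t -> continuous (fun s => du1 n2 s t) x.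
Proof. intros ht. destruct HC2 as [H _]. destruct (H t ht) as [_ A]. apply A. Qed.

Lemma orth x t : 0 <= t -> du1 n1 x t * n1 x t + du1 n2 x t * n2 x t = 0.
Proof.
  intros ht.
  assert (A1 := Derive_correct _ _ (ex_n1 x t ht)).
  assert (A2 := Derive_correct _ _ (ex_n2 x t ht)).
  apply is_derive_Reals in A1. apply is_derive_Reals in A2.
  assert (H1 := derivable_pt_lim_mult _ _ _ _ _ A1 A1).
  assert (H2 := derivable_pt_lim_mult _ _ _ _ _ A2 A2).
  assert (H := derivable_pt_lim_plus _ _ _ _ _ H1 H2).
  assert (H0 : derivable_pt_lim (fun _ => 1) x 0) by apply derivable_pt_lim_const.
  assert (E : forall s, (fun _ : R => 1) s = ((fun s => n1 s t) * (fun s => n1 s t) + (fun s => n2 s t) * (fun s => n2 s t))%F s).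
  { intros s. unfold plus_fct, mult_fct. symmetry; apply Hunit; auto. }
  apply is_derive_Reals in H0. apply (is_derive_ext _ _ x 0 E) in H0. apply is_derive_Reals in H0.
  assert (U := uniqueness_limite _ _ _ _ H H0).
  cbv beta in U. unfold du1.
  change (Derive (fun s : R => n1 s t) x * n1 x t + n1 x t * Derive (fun s : R => n1 s t) x +
    (Derive (fun s : R => n2 s t) x * n2 x t + n2 x t * Derive (fun s : R => n2 s t) x) = 0) in U.
  lra.
Qed.

Lemma dn1_eq x t : 0 <= t -> du1 n1 x t = - ellf x t * n2 x t.
Proof. intros ht. generalize (orth x t ht) (Hunit x t ht). unfold ellf. intros H1 H2.
  set (a := du1 n1 x t) in *. set (b := du1 n2 x t) in *.
  assert (n1 x t * (a * n1 x t + b * n2 x t) = 0) by (rewrite H1; ring).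
  assert (a * (n1 x t * n1 x t + n2 x t * n2 x t) = a) by (rewrite H2; ring). nra. Qed.
Lemma dn2_eq x t : 0 <= t -> du1 n2 x t = ellf x t * n1 x t.
Proof. intros ht. generalize (orth x t ht) (Hunit x t ht). unfold ellf. intros H1 H2.
  set (a := du1 n1 x t) in *. set (b := du1 n2 x t) in *.
  assert (n2 x t * (a * n1 x t + b * n2 x t) = 0) by (rewrite H1; ring).
  assert (b * (n1 x t * n1 x t + n2 x t * n2 x t) = b) by (rewrite H2; ring). nra. Qed.

Lemma n1_bound x t : 0 <= t -> Rabs (n1 x t) <= 1.
Proof. intros ht. generalize (Hunit x t ht). intros. apply Rabs_le. split; nra. Qed.
Lemma n2_bound x t : 0 <= t -> Rabs (n2 x t) <= 1.
Proof. intros ht. generalize (Hunit x t ht). intros. apply Rabs_le. split; nra. Qed.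

Lemma n1_per x t : 0 <= t -> n1 (x + 2 * PI) t = n1 x t.
Proof. intros; unfold n1; rewrite Hper; auto. Qed.
Lemma n2_per x t : 0 <= t -> n2 (x + 2 * PI) t = n2 x t.
Proof. intros; unfold n2; rewrite Hper; auto. Qed.

Lemma Derive_shift (f : R -> R) x p : ex_derive f (x + p) ->
  Derive f (x + p) = Derive (fun s => f (s + p)) x.
Proof.
  intros H. symmetry. apply is_derive_unique.
  apply Derive_correct in H.
  assert (Hs : is_derive (fun s : R => s + p) x 1).
  { apply is_derive_Reals. replace 1 with (1 + 0) by ring.
    apply (derivable_pt_lim_plus (fun s => s) (fun _ => p)). apply derivable_pt_lim_id. apply derivable_pt_lim_const. }
  apply is_derive_Reals in H. apply is_derive_Reals in Hs. apply is_derive_Reals.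
  generalize (derivable_pt_lim_comp _ _ _ _ _ Hs H). rewrite Rmult_1_r. intros K; exact K.
Qed.

Lemma dn1_per x t : 0 <= t -> du1 n1 (x + 2 * PI) t = du1 n1 x t.
Proof.
  intros ht. unfold du1. rewrite Derive_shift by (apply ex_n1; auto).
  apply Derive_ext. intros; apply n1_per; auto.
Qed.
Lemma dn2_per x t : 0 <= t -> du1 n2 (x + 2 * PI) t = du1 n2 x t.
Proof.
  intros ht. unfold du1. rewrite Derive_shift by (apply ex_n2; auto).
  apply Derive_ext. intros; apply n2_per; auto.
Qed.
Lemma ell_per x t : 0 <= t -> ellf (x + 2 * PI) t = ellf x t.
Proof. intros ht. unfold ellf. rewrite dn1_per, dn2_per, n1_per, n2_per; auto. Qed.

Lemma cont_n1 x t : 0 <= t -> continuous (fun s => n1 s t) x.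
Proof. intros. apply (ex_derive_continuous (K:=R_AbsRing) (V:=R_NormedModule)). apply ex_n1; auto. Qed.
Lemma cont_n2 x t : 0 <= t -> continuous (fun s => n2 s t) x.
Proof. intros. apply (ex_derive_continuous (K:=R_AbsRing) (V:=R_NormedModule)). apply ex_n2; auto. Qed.

Lemma cont_ell x t : 0 <= t -> continuous (fun s => ellf s t) x.
Proof.
  intros ht. unfold ellf.
  apply (continuous_plus (fun s => du1 n1 s t * - n2 s t) (fun s => du1 n2 s t * n1 s t)).
  - apply (continuous_mult (fun s => du1 n1 s t) (fun s => - n2 s t)). apply cont_dn1; auto.
    apply (continuous_opp (fun s => n2 s t)). apply cont_n2; auto.
  - apply (continuous_mult (fun s => du1 n2 s t) (fun s => n1 s t)). apply cont_dn2; auto.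
    apply cont_n1; auto.
Qed.

Lemma contpt_ell x t : 0 <= t -> continuity_pt (fun s => ellf s t) x.
Proof. intros. apply continuity_pt_filterlim. apply cont_ell; auto. Qed.

Lemma ell_min t : 0 <= t -> exists m, 0 < m /\ forall x, m <= ellf x t.
Proof.
  intros ht.
  assert (HP := PI_RGT_0).
  destruct (continuity_ab_min (fun s => ellf s t) 0 (2 * PI)) as [mx [H1 H2]].
  lra. intros; apply contpt_ell; auto.
  exists (ellf mx t). split. apply Hpos; auto.
  intros x. destruct (periodic_reduce (fun s => ellf s t)) with (x := x) as [y [Hy E]].
  intros; apply ell_per; auto. simpl in E. rewrite E. apply H1; auto.
Qed.

Lemma ell_max t : 0 <= t -> exists M, forall x, ellf x t <= M.
Proof.
  intros ht.
  assert (HP := PI_RGT_0).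
  destruct (continuity_ab_maj (fun s => ellf s t) 0 (2 * PI)) as [mx [H1 H2]].
  lra. intros; apply contpt_ell; auto.
  exists (ellf mx t).
  intros x. destruct (periodic_reduce (fun s => ellf s t)) with (x := x) as [y [Hy E]].
  intros; apply ell_per; auto. simpl in E. rewrite E. apply H1; auto.
Qed.

Lemma ell_unif t0 : 0 <= t0 -> forall eps, 0 < eps -> exists delta, 0 < delta /\
  forall t, 0 <= t -> Rabs (t - t0) < delta -> forall x, Rabs (ellf x t - ellf x t0) < eps.
Proof.
  intros ht0 eps Heps.
  destruct (ell_max t0 ht0) as [M HM].
  assert (HM0 : 0 <= M) by (generalize (Hpos 0 t0 ht0) (HM 0); lra).
  set (eta := eps / (2 * M + 3)).
  assert (Heta : 0 < eta) by (unfold eta; apply Rdiv_lt_0_compat; lra).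
  destruct HC1 as [_ C1]. destruct HC2 as [_ C2].
  destruct (C1 t0 ht0 eta Heta) as [d1 [Hd1 E1]].
  destruct (C2 t0 ht0 eta Heta) as [d2 [Hd2 E2]].
  exists (Rmin d1 d2). split. apply Rmin_pos; auto.
  intros t ht Htt x.
  destruct (E1 t ht) with (u := x) as [A1 B1]. eapply Rlt_le_trans; [apply Htt|apply Rmin_l].
  destruct (E2 t ht) with (u := x) as [A2 B2]. eapply Rlt_le_trans; [apply Htt|apply Rmin_r].
  change (Derive (fun s => n1 s t) x) with (du1 n1 x t) in B1.
  change (Derive (fun s => n1 s t0) x) with (du1 n1 x t0) in B1.
  change (Derive (fun s => n2 s t) x) with (du1 n2 x t) in B2.
  change (Derive (fun s => n2 s t0) x) with (du1 n2 x t0) in B2.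
  assert (Hb1 : Rabs (du1 n1 x t0) <= M).
  { rewrite dn1_eq, Rabs_mult, Rabs_Ropp, Rabs_right by (auto; left; apply Hpos; auto).
    generalize (n2_bound x t0 ht0) (HM x) (Hpos x t0 ht0) (Rabs_pos (n2 x t0)). intros. nra. }
  assert (Hb2 : Rabs (du1 n2 x t0) <= M).
  { rewrite dn2_eq, Rabs_mult, Rabs_right by (auto; left; apply Hpos; auto).
    generalize (n1_bound x t0 ht0) (HM x) (Hpos x t0 ht0) (Rabs_pos (n1 x t0)). intros. nra. }
  unfold ellf.
  replace (du1 n1 x t * - n2 x t + du1 n2 x t * n1 x t - (du1 n1 x t0 * - n2 x t0 + du1 n2 x t0 * n1 x t0))
    with (- ((du1 n1 x t - du1 n1 x t0) * n2 x t) - du1 n1 x t0 * (n2 x t - n2 x t0)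
          + (du1 n2 x t - du1 n2 x t0) * n1 x t + du1 n2 x t0 * (n1 x t - n1 x t0)) by ring.
  assert (Q1 : Rabs ((du1 n1 x t - du1 n1 x t0) * n2 x t) <= eta).
  { rewrite Rabs_mult. generalize (n2_bound x t ht) (Rabs_pos (n2 x t)) (Rabs_pos (du1 n1 x t - du1 n1 x t0)). nra. }
  assert (Q2 : Rabs (du1 n1 x t0 * (n2 x t - n2 x t0)) <= M * eta).
  { rewrite Rabs_mult. apply Rmult_le_compat; try apply Rabs_pos; lra. }
  assert (Q3 : Rabs ((du1 n2 x t - du1 n2 x t0) * n1 x t) <= eta).
  { rewrite Rabs_mult. generalize (n1_bound x t ht) (Rabs_pos (n1 x t)) (Rabs_pos (du1 n2 x t - du1 n2 x t0)). nra. }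
  assert (Q4 : Rabs (du1 n2 x t0 * (n1 x t - n1 x t0)) <= M * eta).
  { rewrite Rabs_mult. apply Rmult_le_compat; try apply Rabs_pos; lra. }
  assert (Hsum : (2 * M + 3) * eta = eps) by (unfold eta; field; lra).
  eapply Rle_lt_trans. apply Rabs_triang. eapply Rle_lt_trans. apply Rplus_le_compat_r. apply Rabs_triang.
  eapply Rle_lt_trans. apply Rplus_le_compat_r. apply Rplus_le_compat_r. apply Rabs_triang.
  rewrite Rabs_Ropp. rewrite Rabs_minus_sym in Q2 || idtac.
  assert (Rabs (- (du1 n1 x t0 * (n2 x t - n2 x t0))) <= M * eta) by (rewrite Rabs_Ropp; auto).
  nra.
Qed.

Lemma ell_local_min t0 : 0 <= t0 -> exists m delta, 0 < m /\ 0 < delta /\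
  forall t, 0 <= t -> Rabs (t - t0) < delta -> forall x, m <= ellf x t.
Proof.
  intros ht0. destruct (ell_min t0 ht0) as [m0 [Hm0 Hm]].
  destruct (ell_unif t0 ht0 (m0 / 2)) as [d [Hd E]]. lra.
  exists (m0 / 2), d. split; [lra|split; auto].
  intros t ht Htt x. specialize (E t ht Htt x). specialize (Hm x).
  apply Rabs_lt_between in E. lra.
Qed.

Lemma cont2_t f u t : cont2 f u t -> continuous (fun s => f u s) t.
Proof.
  intros H. apply (continuous_comp_2 (fun _ : R => u) (fun s : R => s) f t).
  apply continuous_const. apply continuous_id. exact H.
Qed.
Lemma cont2_u f u t : cont2 f u t -> continuous (fun s => f s t) u.
Proof.
  intros H. apply (continuous_comp_2 (fun s : R => s) (fun _ : R => t) f u).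
  apply continuous_id. apply continuous_const. exact H.
Qed.

Definition w0 s := dt1 n1 0 s * - n2 0 s + dt1 n2 0 s * n1 0 s.

Lemma unit_loc u t : 0 < t -> locally t (fun s => n1 u s * n1 u s + n2 u s * n2 u s = 1).
Proof. intros ht. apply filter_imp with (2 := locally_pos t ht). intros; apply Hunit; lra. Qed.

Lemma dt_decomp u s : 0 < s ->
  dt1 n1 u s = - (dt1 n1 u s * - n2 u s + dt1 n2 u s * n1 u s) * n2 u s /\
  dt1 n2 u s = (dt1 n1 u s * - n2 u s + dt1 n2 u s * n1 u s) * n1 u s.
Proof.
  intros hs. apply unit_decomp. apply Hunit; lra.
  apply (unit_orth (fun r => n1 u r) (fun r => n2 u r)). apply unit_loc; auto.
  apply Derive_correct. apply (HS1 nil u s hs).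
  apply Derive_correct. apply (HS2 nil u s hs).
Qed.

Lemma cont_w0 s : 0 < s -> continuous w0 s.
Proof.
  intros hs. unfold w0.
  assert (A1 : continuous (fun r => dt1 n1 0 r) s) by (apply cont2_t; apply (HS1 (false :: nil) 0 s hs)).
  assert (A2 : continuous (fun r => dt1 n2 0 r) s) by (apply cont2_t; apply (HS2 (false :: nil) 0 s hs)).
  assert (B1 : continuous (fun r => n1 0 r) s) by (apply cont2_t; apply (HS1 nil 0 s hs)).
  assert (B2 : continuous (fun r => n2 0 r) s) by (apply cont2_t; apply (HS2 nil 0 s hs)).
  apply (continuous_plus (fun r => dt1 n1 0 r * - n2 0 r) (fun r => dt1 n2 0 r * n1 0 r)).
  apply (continuous_mult (fun r => dt1 n1 0 r) (fun r => - n2 0 r)); auto.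
  apply (continuous_opp (fun r => n2 0 r)); auto.
  apply (continuous_mult (fun r => dt1 n2 0 r) (fun r => n1 0 r)); auto.
Qed.

Definition c1 := epsilon (inhabits 0) (fun th => sin th = n1 0 1 /\ - cos th = n2 0 1).
Lemma c1_spec : n1 0 1 = sin c1 /\ n2 0 1 = - cos c1.
Proof.
  unfold c1. destruct (epsilon_spec (inhabits 0) (fun th => sin th = n1 0 1 /\ - cos th = n2 0 1)) as [A B].
  apply angle_exists. apply Hunit; lra. split; auto.
Qed.

Definition cpos t := c1 + RInt w0 1 t.

Lemma w0_int a b : 0 < a -> 0 < b -> ex_RInt w0 a b.
Proof.
  intros ha hb. apply (ex_RInt_continuous (V:=R_CompleteNormedModule)). intros z Hz. apply cont_w0.
  unfold Rmin in Hz; destruct (Rle_dec a b); lra.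
Qed.

Lemma cpos_deriv t : 0 < t -> is_derive cpos t (w0 t).
Proof.
  intros ht. unfold cpos.
  apply is_derive_Reals. replace (w0 t) with (0 + w0 t) by ring.
  apply (derivable_pt_lim_plus (fun _ => c1) (fun t => RInt w0 1 t)).
  apply derivable_pt_lim_const. apply is_derive_Reals.
  apply (is_derive_RInt w0 (fun t => RInt w0 1 t) 1 t).
  apply filter_imp with (2 := locally_pos t ht). intros b hb. apply (RInt_correct (V:=R_CompleteNormedModule)). apply w0_int; lra.
  apply cont_w0; auto.
Qed.

Lemma lift_t t : 0 < t -> n1 0 t = sin (cpos t) /\ n2 0 t = - cos (cpos t).
Proof.
  intros ht. destruct c1_spec as [E1 E2].
  apply (rot_unique (fun s => n1 0 s) (fun s => n2 0 s) cpos w0 t 1).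
  - intros s Hs. assert (hs : 0 < s) by (unfold Rmin in Hs; destruct (Rle_dec t 1); lra).
    destruct (dt_decomp 0 s hs) as [D1 D2]. fold (w0 s) in D1, D2.
    split; [|split].
    + rewrite <- D1. apply Derive_correct. apply (HS1 nil 0 s hs).
    + rewrite <- D2. apply Derive_correct. apply (HS2 nil 0 s hs).
    + apply cpos_deriv; auto.
  - unfold cpos. rewrite RInt_point. unfold zero; simpl. rewrite Rplus_0_r. auto.
  - unfold cpos. rewrite RInt_point. unfold zero; simpl. rewrite Rplus_0_r. auto.
Qed.

Lemma nu0_cont eps : 0 < eps -> exists delta, 0 < delta /\ forall t, 0 <= t -> t < delta ->
  Rabs (n1 0 t - n1 0 0) < eps /\ Rabs (n2 0 t - n2 0 0) < eps.
Proof.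
  intros He. destruct HC1 as [_ C1]. destruct HC2 as [_ C2].
  destruct (C1 0 (Rle_refl 0) eps He) as [d1 [Hd1 E1]].
  destruct (C2 0 (Rle_refl 0) eps He) as [d2 [Hd2 E2]].
  exists (Rmin d1 d2). split. apply Rmin_pos; auto.
  intros t ht Htd. split.
  - apply (E1 t ht). rewrite Rminus_0_r, Rabs_right by lra. eapply Rlt_le_trans; [apply Htd|apply Rmin_l].
  - apply (E2 t ht). rewrite Rminus_0_r, Rabs_right by lra. eapply Rlt_le_trans; [apply Htd|apply Rmin_r].
Qed.

Lemma cpos_contpt t : 0 < t -> continuity_pt cpos t.
Proof.
  intros ht. apply continuity_pt_filterlim.
  apply (ex_derive_continuous (K:=R_AbsRing) (V:=R_NormedModule)). eexists; apply cpos_deriv; auto.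
Qed.

Lemma c0_exists : exists c, sin c = n1 0 0 /\ - cos c = n2 0 0 /\
  forall eps, 0 < eps -> exists delta, 0 < delta /\ forall t, 0 < t < delta -> Rabs (cpos t - c) < eps.
Proof.
  assert (HP := PI_RGT_0).
  destruct (angle_exists (n1 0 0) (n2 0 0)) as [a0 [Ea1 Ea2]]. apply Hunit; lra.
  destruct (nu0_cont (1/4)) as [d1 [Hd1 E1]]. lra.
  assert (Hcos : forall t, 0 < t < d1 -> 0 < cos (cpos t - a0)).
  { intros t Ht. destruct (lift_t t ltac:(lra)) as [L1 L2]. rewrite cos_minus.
    destruct (E1 t ltac:(lra) ltac:(lra)) as [F1 F2].
    assert (U0 := Hunit 0 0 (Rle_refl 0)). assert (Ut := Hunit 0 t ltac:(lra)).
    assert (G1 : (n1 0 t - n1 0 0) * (n1 0 t - n1 0 0) < 1/16).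
    { apply Rabs_lt_between in F1. nra. }
    assert (G2 : (n2 0 t - n2 0 0) * (n2 0 t - n2 0 0) < 1/16).
    { apply Rabs_lt_between in F2. nra. }
    replace (cos (cpos t) * cos a0 + sin (cpos t) * sin a0) with (n2 0 t * n2 0 0 + n1 0 t * n1 0 0)
      by (rewrite L1, L2, <- Ea1, <- Ea2; ring).
    nra. }
  set (t1 := d1 / 2).
  assert (Ht1 : 0 < t1 < d1) by (unfold t1; lra).
  destruct (reduce2pi (cpos t1 - a0 + PI / 2)) as [k [y [Ey Hy]]].
  assert (Hsy : cos (cpos t1 - a0) = sin y).
  { replace (cpos t1 - a0) with ((y - PI / 2) + 2 * PI * IZR k) by lra.
    rewrite (periodic_Z cos (2 * PI)). rewrite cos_minus, cos_PI2, sin_PI2. ring.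
    intros z. rewrite cos_plus, cos_2PI, sin_2PI. ring. }
  assert (Hy2 : 0 < y < PI).
  { assert (0 < sin y) by (rewrite <- Hsy; apply Hcos; auto).
    split. destruct (Req_dec y 0); [subst; rewrite sin_0 in H; lra|lra].
    destruct (Rlt_le_dec y PI); auto. assert (sin y <= 0) by (apply sin_le_0; lra). lra. }
  set (c := a0 + 2 * PI * IZR k).
  assert (Hsc : sin c = sin a0) by (unfold c; apply (periodic_Z sin (2 * PI)); intros z; rewrite sin_plus, cos_2PI, sin_2PI; ring).
  assert (Hcc : cos c = cos a0) by (unfold c; apply (periodic_Z cos (2 * PI)); intros z; rewrite cos_plus, cos_2PI, sin_2PI; ring).
  assert (Hbr : forall t, 0 < t < d1 -> - (PI / 2) < cpos t - c < PI / 2).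
  { intros t Ht.
    assert (Hg : forall s, Rmin t1 t <= s <= Rmax t1 t -> continuity_pt (fun s => cpos s - c) s /\
               forall v, (v = PI / 2 \/ v = - (PI / 2)) -> cpos s - c <> v).
    { intros s Hs. assert (Hs' : 0 < s < d1) by (unfold Rmin, Rmax in Hs; destruct (Rle_dec t1 t); lra).
      split. apply (continuity_pt_minus cpos (fun _ => c)). apply cpos_contpt; lra.
      apply continuity_pt_const; intros ? ?; auto.
      intros v Hv E. assert (Hc := Hcos s Hs').
      replace (cpos s - a0) with (v + 2 * PI * IZR k) in Hc by (unfold c in E; lra).
      rewrite (periodic_Z cos (2 * PI)) in Hc by (intros z; rewrite cos_plus, cos_2PI, sin_2PI; ring).
      destruct Hv; subst v. rewrite cos_PI2 in Hc; lra. rewrite cos_neg, cos_PI2 in Hc; lra. }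
    split.
    - apply (no_cross_gt (fun s => cpos s - c) t1 t (- (PI / 2))).
      intros s Hs; destruct (Hg s Hs) as [A B]; split; auto.
      unfold c. lra.
    - apply (no_cross (fun s => cpos s - c) t1 t (PI / 2)).
      intros s Hs; destruct (Hg s Hs) as [A B]; split; auto.
      unfold c. lra. }
  exists c. split; [rewrite Hsc; auto|split; [rewrite Hcc; auto|]].
  intros eps Heps.
  assert (Has : continuity_pt asin 0).
  { apply derivable_continuous_pt. apply derivable_pt_asin. lra. }
  destruct (Has eps Heps) as [eta [Heta Hasin]].
  destruct (nu0_cont (eta / 2)) as [d2 [Hd2 E2]]. lra.
  exists (Rmin d1 d2). split. apply Rmin_pos; auto.
  intros t Ht. assert (Ht1' : 0 < t < d1) by (split; [lra|]; eapply Rlt_le_trans; [apply Ht|apply Rmin_l]).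
  assert (Ht2 : t < d2) by (eapply Rlt_le_trans; [apply Ht|apply Rmin_r]).
  destruct (E2 t ltac:(lra) Ht2) as [F1 F2].
  destruct (lift_t t ltac:(lra)) as [L1 L2].
  set (x := cpos t - c).
  assert (Hx := Hbr t Ht1'). fold x in Hx.
  assert (Ex : asin (sin x) = x) by (apply asin_sin; lra).
  assert (Hsx : sin x = (n2 0 t - n2 0 0) * n1 0 0 - (n1 0 t - n1 0 0) * n2 0 0).
  { unfold x. rewrite sin_minus, Hsc, Hcc, Ea1. replace (cos a0) with (- n2 0 0) by lra.
    replace (sin (cpos t)) with (n1 0 t) by lra. replace (cos (cpos t)) with (- n2 0 t) by lra. ring. }
  assert (Hsmall : Rabs (sin x) < eta).
  { rewrite Hsx. eapply Rle_lt_trans. apply Rabs_triang. rewrite Rabs_Ropp, !Rabs_mult.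
    generalize (n1_bound 0 0 (Rle_refl 0)) (n2_bound 0 0 (Rle_refl 0)) (Rabs_pos (n2 0 t - n2 0 0)) (Rabs_pos (n1 0 t - n1 0 0)) (Rabs_pos (n1 0 0)) (Rabs_pos (n2 0 0)).
    intros. nra. }
  destruct (Req_dec (sin x) 0) as [Z|Z].
  - rewrite Z, asin_0 in Ex. rewrite <- Ex, Rabs_R0; auto.
  - assert (K := Hasin (sin x)). simpl in K; unfold R_dist in K. rewrite asin_0, Rminus_0_r, Ex, Rminus_0_r in K.
    apply K. split. unfold D_x, no_cond. split; auto. auto.
Qed.

Definition c0 := epsilon (inhabits 0) (fun c => sin c = n1 0 0 /\ - cos c = n2 0 0 /\
  forall eps, 0 < eps -> exists delta, 0 < delta /\ forall t, 0 < t < delta -> Rabs (cpos t - c) < eps).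
Lemma c0_spec : sin c0 = n1 0 0 /\ - cos c0 = n2 0 0 /\
  forall eps, 0 < eps -> exists delta, 0 < delta /\ forall t, 0 < t < delta -> Rabs (cpos t - c0) < eps.
Proof. unfold c0. apply epsilon_spec. apply c0_exists. Qed.

Definition ctot t := if Rle_dec t 0 then c0 else cpos t.

Lemma lift0 t : 0 <= t -> n1 0 t = sin (ctot t) /\ n2 0 t = - cos (ctot t).
Proof.
  intros ht. unfold ctot. destruct (Rle_dec t 0).
  - assert (t = 0) by lra. subst. destruct c0_spec as [A [B _]]. split; lra.
  - apply lift_t. lra.
Qed.

Lemma ctot_cont t0 : 0 <= t0 -> forall eps, 0 < eps -> exists delta, 0 < delta /\
  forall t, 0 <= t -> Rabs (t - t0) < delta -> Rabs (ctot t - ctot t0) < eps.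
Proof.
  intros ht0 eps Heps. destruct (Req_dec t0 0) as [Z|Z].
  - subst. destruct c0_spec as [_ [_ C]]. destruct (C eps Heps) as [d [Hd E]].
    exists d. split; auto. intros t ht Htd. unfold ctot at 2. destruct (Rle_dec 0 0); [|lra].
    unfold ctot. destruct (Rle_dec t 0). rewrite Rminus_eq_0, Rabs_R0; auto.
    apply E. rewrite Rminus_0_r, Rabs_right in Htd; lra.
  - assert (ht : 0 < t0) by lra. destruct (cpos_contpt t0 ht eps Heps) as [d [Hd E]].
    exists (Rmin d t0). split. apply Rmin_pos; auto.
    intros t _ Htd. assert (Htd1 : Rabs (t - t0) < d) by (eapply Rlt_le_trans; [apply Htd|apply Rmin_l]).
    assert (Htd2 : Rabs (t - t0) < t0) by (eapply Rlt_le_trans; [apply Htd|apply Rmin_r]).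
    apply Rabs_lt_between' in Htd2.
    unfold ctot. destruct (Rle_dec t 0); [lra|]. destruct (Rle_dec t0 0); [lra|].
    destruct (Req_dec t t0) as [->|Ne]. rewrite Rminus_eq_0, Rabs_R0; auto.
    apply (E t). split. split. exact I. auto. simpl; unfold R_dist. auto.
Qed.

Definition Lf x t := RInt (fun s => ellf s t) 0 x.
Definition theta x t := ctot t + Lf x t.

Lemma ell_int t a b : 0 <= t -> ex_RInt (fun s => ellf s t) a b.
Proof. intros ht. apply (ex_RInt_continuous (V:=R_CompleteNormedModule)). intros; apply cont_ell; auto. Qed.

Lemma Lf_deriv x t : 0 <= t -> is_derive (fun y => Lf y t) x (ellf x t).
Proof.
  intros ht. unfold Lf. apply (is_derive_RInt (fun s => ellf s t) (fun y => RInt (fun s => ellf s t) 0 y) 0 x).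
  apply filter_forall. intros b. apply (RInt_correct (V:=R_CompleteNormedModule)). apply ell_int; auto.
  apply cont_ell; auto.
Qed.

Lemma theta_deriv x t : 0 <= t -> is_derive (fun y => theta y t) x (ellf x t).
Proof.
  intros ht. unfold theta. apply is_derive_Reals. replace (ellf x t) with (0 + ellf x t) by ring.
  apply (derivable_pt_lim_plus (fun _ => ctot t) (fun y => Lf y t)). apply derivable_pt_lim_const.
  apply is_derive_Reals. apply Lf_deriv; auto.
Qed.

Lemma lift_x x t : 0 <= t -> n1 x t = sin (theta x t) /\ n2 x t = - cos (theta x t).
Proof.
  intros ht. destruct (lift0 t ht) as [E1 E2].
  apply (rot_unique (fun s => n1 s t) (fun s => n2 s t) (fun s => theta s t) (fun s => ellf s t) x 0).
  - intros s _. split; [|split].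
    + rewrite <- dn1_eq by auto. apply Derive_correct. apply ex_n1; auto.
    + rewrite <- dn2_eq by auto. apply Derive_correct. apply ex_n2; auto.
    + apply theta_deriv; auto.
  - unfold theta, Lf. rewrite RInt_point. unfold zero; simpl. rewrite Rplus_0_r. auto.
  - unfold theta, Lf. rewrite RInt_point. unfold zero; simpl. rewrite Rplus_0_r. auto.
Qed.

Lemma wind t : 0 <= t -> exists k : Z, Lf (2 * PI) t = 2 * PI * IZR k.
Proof.
  intros ht. destruct (lift_x (2 * PI) t ht) as [A1 A2]. destruct (lift_x 0 t ht) as [B1 B2].
  assert (P1 := n1_per 0 t ht). assert (P2 := n2_per 0 t ht). rewrite Rplus_0_l in P1, P2.
  destruct (sincos_eq (theta (2 * PI) t) (theta 0 t)) as [k Ek].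
  rewrite <- A1, <- B1; auto. assert (- cos (theta (2 * PI) t) = - cos (theta 0 t)) by (rewrite <- A2, <- B2; auto). lra.
  exists k. unfold theta, Lf in Ek. rewrite RInt_point in Ek. unfold zero in Ek; simpl in Ek.
  unfold Lf. lra.
Qed.

Lemma Lf_diff_bound x t t0 eta : 0 <= t -> 0 <= t0 ->
  (forall s, Rabs (ellf s t - ellf s t0) <= eta) -> Rabs (Lf x t - Lf x t0) <= Rabs x * eta.
Proof.
  intros ht ht0 H. unfold Lf.
  assert (E : RInt (fun s => ellf s t) 0 x - RInt (fun s => ellf s t0) 0 x = RInt (fun s => ellf s t - ellf s t0) 0 x).
  { symmetry. apply (RInt_minus (V:=R_CompleteNormedModule)); apply ell_int; auto. }
  rewrite E. destruct (Rle_dec 0 x).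
  - rewrite (Rabs_right x) by lra. replace (x * eta) with ((x - 0) * eta) by ring.
    apply abs_RInt_le_const; auto. apply (ex_RInt_minus (V:=R_CompleteNormedModule)); apply ell_int; auto.
  - rewrite <- (opp_RInt_swap (V:=R_CompleteNormedModule)). unfold opp; simpl. rewrite Rabs_Ropp.
    rewrite (Rabs_left x) by lra. replace (- x * eta) with ((0 - x) * eta) by ring.
    apply abs_RInt_le_const; [lra| |auto]. apply (ex_RInt_minus (V:=R_CompleteNormedModule)); apply ell_int; auto.
    apply (ex_RInt_minus (V:=R_CompleteNormedModule)); apply ell_int; auto.
Qed.

Lemma Lf_cont x t0 : 0 <= t0 -> forall eps, 0 < eps -> exists delta, 0 < delta /\
  forall t, 0 <= t -> Rabs (t - t0) < delta -> Rabs (Lf x t - Lf x t0) < eps.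
Proof.
  intros ht0 eps Heps.
  destruct (ell_unif t0 ht0 (eps / (Rabs x + 1))) as [d [Hd E]].
  apply Rdiv_lt_0_compat; auto. generalize (Rabs_pos x); lra.
  exists d. split; auto. intros t ht Htd.
  eapply Rle_lt_trans. apply (Lf_diff_bound x t t0 (eps / (Rabs x + 1))); auto.
  intros s; left; apply E; auto.
  assert (0 <= Rabs x) by apply Rabs_pos.
  apply Rle_lt_trans with ((Rabs x + 1) * (eps / (Rabs x + 1)) - eps / (Rabs x + 1)).
  right; field; lra. replace ((Rabs x + 1) * (eps / (Rabs x + 1))) with eps by (field; lra).
  assert (0 < eps / (Rabs x + 1)) by (apply Rdiv_lt_0_compat; lra). lra.
Qed.

Lemma Rmax_lip a b : Rabs (Rmax 0 a - Rmax 0 b) <= Rabs (a - b).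
Proof. unfold Rmax. destruct (Rle_dec 0 a); destruct (Rle_dec 0 b); unfold Rabs;
  repeat destruct Rcase_abs; lra. Qed.

Lemma wind_const t : 0 <= t -> Lf (2 * PI) t = Lf (2 * PI) 0.
Proof.
  intros ht. set (G := fun s => Lf (2 * PI) (Rmax 0 s)).
  assert (GC : forall s, continuity_pt G s).
  { intros s eps Heps. destruct (Lf_cont (2 * PI) (Rmax 0 s) (Rmax_l 0 s) eps Heps) as [d [Hd E]].
    exists d. split; auto. intros y [_ Hy]. simpl in Hy; unfold R_dist in Hy. simpl; unfold R_dist.
    unfold G. apply E. apply Rmax_l. eapply Rle_lt_trans; [apply Rmax_lip|auto]. }
  assert (GZ : forall s, exists k : Z, G s = 2 * PI * IZR k) by (intros s; apply wind; apply Rmax_l).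
  assert (HP := PI_RGT_0).
  assert (G0 : G 0 = Lf (2 * PI) 0) by (unfold G; rewrite Rmax_left; lra).
  assert (Gt : G t = Lf (2 * PI) t) by (unfold G; rewrite Rmax_right; lra).
  destruct (GZ 0) as [k0 E0]. destruct (GZ t) as [k1 E1].
  assert (Hne : forall s (j : Z), G s <> 2 * PI * IZR k0 + 2 * PI * IZR j + PI).
  { intros s j E. destruct (GZ s) as [k Ek]. rewrite Ek in E.
    assert (IZR (2 * k) = IZR (2 * k0 + 2 * j + 1)).
    { rewrite !plus_IZR, !mult_IZR. apply Rmult_eq_reg_l with PI; [|lra]. simpl. lra. }
    apply eq_IZR in H. lia. }
  destruct (Z.lt_total k0 k1) as [Hk|[Hk|Hk]].
  - exfalso. assert (G t < 2 * PI * IZR k0 + PI).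
    { apply (no_cross G 0 t). intros s _. split; auto.
      replace (2 * PI * IZR k0 + PI) with (2 * PI * IZR k0 + 2 * PI * IZR 0 + PI) by (simpl; ring). apply Hne. lra. }
    rewrite E1 in H. apply IZR_lt in Hk. assert (IZR k0 + 1 <= IZR k1).
    { rewrite <- plus_IZR. apply IZR_le. apply lt_IZR in Hk. lia. } nra.
  - subst. congruence.
  - exfalso. assert (2 * PI * IZR k0 - PI < G t).
    { apply (no_cross_gt G 0 t). intros s _. split; auto.
      replace (2 * PI * IZR k0 - PI) with (2 * PI * IZR k0 + 2 * PI * IZR (-1) + PI) by (simpl; ring). apply Hne. lra. }
    rewrite E1 in H. assert (IZR k1 + 1 <= IZR k0).
    { rewrite <- plus_IZR. apply IZR_le. lia. } nra.
Qed.

Definition nZ := (up (Lf (2 * PI) 0 / (2 * PI)) - 1)%Z.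
Lemma nZ_spec : Lf (2 * PI) 0 = 2 * PI * IZR nZ.
Proof.
  assert (HP := PI_RGT_0).
  destruct (wind 0 (Rle_refl 0)) as [k E]. unfold nZ. rewrite E.
  replace (2 * PI * IZR k / (2 * PI)) with (IZR k) by (field; lra).
  destruct (archimed (IZR k)) as [A B].
  assert (up (IZR k) = k + 1)%Z.
  { apply lt_IZR in A. assert (IZR (up (IZR k)) <= IZR (k + 1)) by (rewrite plus_IZR; simpl; lra).
    apply le_IZR in H. lia. }
  rewrite H. f_equal. f_equal. lia.
Qed.

Lemma nZ_pos : (0 < nZ)%Z.
Proof.
  assert (HP := PI_RGT_0).
  assert (0 < Lf (2 * PI) 0).
  { unfold Lf. apply RInt_gt_0. lra. intros; apply Hpos; lra. intros; apply cont_ell; lra. }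
  rewrite nZ_spec in H. apply lt_IZR. simpl. nra.
Qed.

Definition n := Z.to_nat nZ.
Lemma INR_n : INR n = IZR nZ.
Proof. unfold n. rewrite INR_IZR_INZ, Z2Nat.id; auto. generalize nZ_pos; lia. Qed.
Lemma n_pos : 0 < INR n.
Proof. rewrite INR_n. apply IZR_lt. apply nZ_pos. Qed.

Lemma Lf_2pi t : 0 <= t -> Lf (2 * PI) t = 2 * PI * INR n.
Proof. intros ht. rewrite wind_const, nZ_spec, INR_n; auto. Qed.

Lemma theta_per x t : 0 <= t -> theta (x + 2 * PI) t = theta x t + 2 * PI * INR n.
Proof.
  intros ht. unfold theta.
  assert (E : (fun y => Lf (y + 2 * PI) t - Lf y t) x = (fun y => Lf (y + 2 * PI) t - Lf y t) 0).
  { apply (const_on (fun y => Lf (y + 2 * PI) t - Lf y t)). intros s _.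
    apply is_derive_Reals. replace 0 with (ellf (s + 2 * PI) t * 1 - ellf s t) by (rewrite ell_per; auto; ring).
    apply (derivable_pt_lim_minus (fun y => Lf (y + 2 * PI) t) (fun y => Lf y t)).
    - apply (derivable_pt_lim_comp (fun y => y + 2 * PI) (fun y => Lf y t)).
      replace 1 with (1 + 0) by ring. apply (derivable_pt_lim_plus (fun y => y) (fun _ => 2 * PI)).
      apply derivable_pt_lim_id. apply derivable_pt_lim_const.
      apply is_derive_Reals. apply Lf_deriv; auto.
    - apply is_derive_Reals. apply Lf_deriv; auto. }
  simpl in E. rewrite Rplus_0_l in E. assert (Lf 0 t = 0) by (unfold Lf; rewrite RInt_point; auto). rewrite H in E.
  rewrite Lf_2pi in E; auto. lra.
Qed.

Lemma theta_contpt x t : 0 <= t -> continuity_pt (fun s => theta s t) x.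
Proof.
  intros ht. apply continuity_pt_filterlim. apply (ex_derive_continuous (K:=R_AbsRing) (V:=R_NormedModule) (fun s => theta s t)).
  eexists; apply theta_deriv; auto.
Qed.

Lemma theta_mono x y t m : 0 <= t -> (forall s, m <= ellf s t) -> y <= x ->
  m * (x - y) <= theta x t - theta y t.
Proof.
  intros ht Hm Hxy. destruct (MVT_gen (fun s => theta s t) y x (fun s => ellf s t)) as [c [_ E]].
  intros; apply theta_deriv; auto.
  intros; apply theta_contpt; auto.
  simpl in E. rewrite E. apply Rmult_le_compat_r; [lra|apply Hm].
Qed.


Lemma theta_surj t v : 0 <= t -> exists x, theta x t = v.
Proof.
  intros ht. destruct (ell_min t ht) as [m [Hm Hml]].
  set (r := Rabs (v - theta 0 t) / m + 1).
  assert (Hr : 1 <= r) by (unfold r; assert (0 <= Rabs (v - theta 0 t) / m) by (apply Rdiv_le_0_compat; [apply Rabs_pos|lra]); lra).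
  assert (H1 := theta_mono r 0 t m ht Hml ltac:(lra)).
  assert (H2 := theta_mono 0 (- r) t m ht Hml ltac:(lra)).
  assert (Hmr : m * r = Rabs (v - theta 0 t) + m) by (unfold r; field; lra).
  destruct (Ranalysis5.IVT_interv (fun s => theta s t - v) (- r) r) as [z [_ Ez]].
  - intros a _. apply (continuity_pt_minus (fun s => theta s t) (fun _ => v)). apply theta_contpt; auto.
    apply continuity_pt_const; intros ? ?; auto.
  - lra.
  - simpl. assert (v - theta 0 t <= Rabs (v - theta 0 t)) by apply RRle_abs.
    assert (m * (0 - - r) = m * r) by ring. assert (theta 0 t - v <= Rabs (v - theta 0 t)) by (rewrite Rabs_minus_sym; apply RRle_abs). lra.
  - simpl. assert (theta 0 t - v <= Rabs (v - theta 0 t)) by (rewrite Rabs_minus_sym; apply RRle_abs).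
    assert (m * (r - 0) = m * r) by ring. assert (v - theta 0 t <= Rabs (v - theta 0 t)) by apply RRle_abs. lra.
  - exists z. lra.
Qed.

Lemma theta_inj x y t : 0 <= t -> theta x t = theta y t -> x = y.
Proof.
  intros ht E. destruct (ell_min t ht) as [m [Hm Hml]].
  destruct (Rle_dec y x).
  - assert (H := theta_mono x y t m ht Hml r). nra.
  - assert (H := theta_mono y x t m ht Hml ltac:(lra)). nra.
Qed.

Definition phi u t := epsilon (inhabits 0) (fun x => theta x t = INR n * u).

Lemma phi_spec u t : 0 <= t -> theta (phi u t) t = INR n * u.
Proof. intros ht. unfold phi. apply (epsilon_spec (inhabits 0) (fun x => theta x t = INR n * u)). apply theta_surj; auto. Qed.

Lemma phi_nu u t : 0 <= t -> n1 (phi u t) t = sin (INR n * u) /\ n2 (phi u t) t = - cos (INR n * u).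
Proof. intros ht. rewrite <- (phi_spec u t ht). apply lift_x; auto. Qed.

Lemma phi_per u t : 0 <= t -> phi (u + 2 * PI) t = phi u t + 2 * PI.
Proof.
  intros ht. apply (theta_inj _ _ t ht). rewrite theta_per, !phi_spec by auto. ring.
Qed.

Lemma phi_mono u v t m : 0 <= t -> (forall s, m <= ellf s t) -> 0 < m -> v <= u ->
  phi v t <= phi u t /\ m * (phi u t - phi v t) <= INR n * (u - v).
Proof.
  intros ht Hm hm Huv. assert (Hn := n_pos).
  assert (phi v t <= phi u t).
  { destruct (Rle_dec (phi v t) (phi u t)); auto.
    assert (H := theta_mono (phi v t) (phi u t) t m ht Hm ltac:(lra)). rewrite !phi_spec in H by auto.
    exfalso. assert (0 < m * (phi v t - phi u t)) by (apply Rmult_lt_0_compat; lra). nra. }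
  split; auto. assert (H0 := theta_mono (phi u t) (phi v t) t m ht Hm H). rewrite !phi_spec in H0 by auto.
  lra.
Qed.

Lemma phi_lip u v t m : 0 <= t -> (forall s, m <= ellf s t) -> 0 < m ->
  Rabs (phi u t - phi v t) <= INR n / m * Rabs (u - v).
Proof.
  intros ht Hm hm. assert (Hn := n_pos).
  destruct (Rle_dec v u).
  - destruct (phi_mono u v t m ht Hm hm r) as [A B].
    rewrite !Rabs_right by lra. apply Rmult_le_reg_l with m; auto. replace (m * (INR n / m * (u - v))) with (INR n * (u - v)) by (field; lra). auto.
  - destruct (phi_mono v u t m ht Hm hm ltac:(lra)) as [A B].
    rewrite !Rabs_left1 by lra. apply Rmult_le_reg_l with m; auto. replace (m * (INR n / m * - (u - v))) with (INR n * (v - u)) by (field; lra). lra.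
Qed.

Lemma diff_of_deriv (f : R -> R) x y l c : derivable_pt_lim f x l ->
  differentiable_pt_lim (fun a b => f a + c * b) x y l c.
Proof.
  intros H eps. destruct (H eps (cond_pos eps)) as [d Hd].
  exists d. intros a b Ha Hb.
  replace (f a + c * b - (f x + c * y) - (l * (a - x) + c * (b - y))) with (f a - f x - l * (a - x)) by ring.
  apply Rle_trans with (eps * Rabs (a - x)); [|apply Rmult_le_compat_l; [destruct eps; simpl; lra|apply Rmax_l]].
  destruct (Req_dec a x) as [->|Ne].
  - replace (f x - f x - l * (x - x)) with 0 by ring. rewrite Rabs_R0. apply Rmult_le_pos; [destruct eps; simpl; lra|apply Rabs_pos].
  - assert (Hh := Hd (a - x) ltac:(lra) Ha). replace (x + (a - x)) with a in Hh by ring.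
    replace (f a - f x - l * (a - x)) with (((f a - f x) / (a - x) - l) * (a - x)) by (field; lra).
    rewrite Rabs_mult. apply Rmult_le_compat_r. apply Rabs_pos. left; auto.
Qed.

Lemma phi_deriv_u u t : 0 <= t -> derivable_pt_lim (fun s => phi s t) u (INR n / ellf (phi u t) t).
Proof.
  intros ht. destruct (ell_min t ht) as [m [hm Hm]]. assert (Hn := n_pos).
  replace (INR n / ellf (phi u t) t) with (- (- INR n) / ellf (phi u t) t) by (field; apply Rgt_not_eq, Hpos; auto).
  apply (implicit_deriv (fun a b => theta a t + (- INR n) * b) (fun s => phi s t)).
  - apply diff_of_deriv. apply is_derive_Reals. apply theta_deriv; auto.
  - apply Rgt_not_eq, Hpos; auto.
  - intros eps Heps. exists (eps * m / INR n). split. apply Rmult_lt_0_compat. nra. apply Rinv_0_lt_compat; auto.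
    intros x [_ Hx]. simpl in *; unfold R_dist in *. eapply Rle_lt_trans. apply (phi_lip x u t m ht Hm hm).
    apply Rmult_lt_reg_l with (m / INR n). apply Rdiv_lt_0_compat; auto.
    replace (m / INR n * (INR n / m * Rabs (x - u))) with (Rabs (x - u)) by (field; lra).
    replace (m / INR n * eps) with (eps * m / INR n) by (field; lra). auto.
  - apply filter_forall. intros s. simpl. rewrite !phi_spec by auto. ring.
Qed.

Lemma phi_close u t t0 m : 0 <= t -> 0 <= t0 -> (forall s, m <= ellf s t) -> 0 < m ->
  Rabs (phi u t - phi u t0) <= / m * Rabs (theta (phi u t0) t0 - theta (phi u t0) t).
Proof.
  intros ht ht0 Hm hm.
  assert (E : theta (phi u t) t = theta (phi u t0) t0) by (rewrite !phi_spec; auto).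
  rewrite <- E. apply Rmult_le_reg_l with m; auto. rewrite <- Rmult_assoc, Rinv_r, Rmult_1_l by lra.
  destruct (Rle_dec (phi u t0) (phi u t)).
  - assert (H := theta_mono (phi u t) (phi u t0) t m ht Hm r).
    assert (0 <= m * (phi u t - phi u t0)) by (apply Rmult_le_pos; lra).
    rewrite !Rabs_right by lra. lra.
  - assert (H := theta_mono (phi u t0) (phi u t) t m ht Hm ltac:(lra)).
    assert (0 <= m * (phi u t0 - phi u t)) by (apply Rmult_le_pos; lra).
    rewrite !Rabs_left1 by lra. lra.
Qed.

Lemma phi_bound u t : 0 <= t -> 0 <= u <= 2 * PI -> Rabs (phi u t) <= Rabs (phi 0 t) + 2 * PI.
Proof.
  intros ht Hu. destruct (ell_min t ht) as [m [hm Hm]].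
  destruct (phi_mono u 0 t m ht Hm hm ltac:(lra)) as [A _].
  destruct (phi_mono (2 * PI) u t m ht Hm hm ltac:(lra)) as [B _].
  rewrite <- (Rplus_0_l (2 * PI)) in B at 1. rewrite phi_per in B by auto.
  unfold Rabs; repeat destruct Rcase_abs; generalize PI_RGT_0; lra.
Qed.

Lemma phi_unif t0 : 0 <= t0 -> forall eps, 0 < eps -> exists delta, 0 < delta /\
  forall t, 0 <= t -> Rabs (t - t0) < delta -> forall u, Rabs (phi u t - phi u t0) < eps.
Proof.
  intros ht0 eps Heps.
  destruct (ell_local_min t0 ht0) as [m [d0 [hm [hd0 Hm]]]].
  set (B := Rabs (phi 0 t0) + 2 * PI).
  assert (HB : 0 < B) by (unfold B; generalize (Rabs_pos (phi 0 t0)) PI_RGT_0; lra).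
  destruct (ctot_cont t0 ht0 (eps * m / 2)) as [d1 [hd1 E1]]. apply Rmult_lt_0_compat; [nra|lra].
  destruct (ell_unif t0 ht0 (eps * m / (2 * B))) as [d2 [hd2 E2]].
  apply Rdiv_lt_0_compat; nra.
  exists (Rmin d0 (Rmin d1 d2)). split. repeat apply Rmin_pos; auto.
  intros t ht Htd.
  assert (T0 : Rabs (t - t0) < d0) by (eapply Rlt_le_trans; [apply Htd|apply Rmin_l]).
  assert (T1 : Rabs (t - t0) < d1) by (eapply Rlt_le_trans; [apply Htd|]; eapply Rle_trans; [apply Rmin_r|apply Rmin_l]).
  assert (T2 : Rabs (t - t0) < d2) by (eapply Rlt_le_trans; [apply Htd|]; eapply Rle_trans; [apply Rmin_r|apply Rmin_r]).
  assert (Hmt := Hm t ht T0).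
  assert (Hred : forall u, 0 <= u <= 2 * PI -> Rabs (phi u t - phi u t0) < eps).
  { intros u Hu. eapply Rle_lt_trans. apply (phi_close u t t0 m ht ht0 Hmt hm).
    set (x := phi u t0). assert (Hx : Rabs x <= B) by (apply phi_bound; auto).
    unfold theta.
    replace (ctot t0 + Lf x t0 - (ctot t + Lf x t)) with (- (ctot t - ctot t0) - (Lf x t - Lf x t0)) by ring.
    assert (A1 := E1 t ht T1).
    assert (A2 : Rabs (Lf x t - Lf x t0) <= B * (eps * m / (2 * B))).
    { eapply Rle_trans. apply Lf_diff_bound; auto. intros s; left; apply E2; auto.
      apply Rmult_le_compat_r; auto. left; apply Rdiv_lt_0_compat; nra. }
    replace (B * (eps * m / (2 * B))) with (eps * m / 2) in A2 by (field; lra).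
    assert (A3 : Rabs (- (ctot t - ctot t0) - (Lf x t - Lf x t0)) < eps * m).
    { eapply Rle_lt_trans. apply Rabs_triang. rewrite Rabs_Ropp, Rabs_Ropp. lra. }
    apply Rmult_lt_reg_l with m; auto. rewrite <- Rmult_assoc, Rinv_r, Rmult_1_l by lra. lra. }
  intros u.
  destruct (periodic_reduce (fun u => phi u t - phi u t0)) with (x := u) as [y [Hy Ey]].
  { intros z. simpl. rewrite !phi_per by auto. ring. }
  simpl in Ey. rewrite Ey. apply Hred; auto.
Qed.

Lemma phi_cont2d u0 t0 : 0 < t0 -> continuity_2d_pt phi u0 t0.
Proof.
  intros ht0 eps.
  destruct (ell_local_min t0 ltac:(lra)) as [m [d0 [hm [hd0 Hm]]]].
  destruct (phi_unif t0 ltac:(lra) (eps / 2)) as [d1 [hd1 E1]]. destruct eps; simpl; lra.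
  assert (Hn := n_pos).
  assert (Hd : 0 < Rmin (Rmin d0 d1) (Rmin t0 (eps / 2 * m / INR n))).
  { repeat apply Rmin_pos; auto. apply Rmult_lt_0_compat. apply Rmult_lt_0_compat; auto. destruct eps; simpl; lra.
    apply Rinv_0_lt_compat; auto. }
  exists (mkposreal _ Hd). simpl. intros u t Hu Ht.
  assert (T0 : Rabs (t - t0) < d0) by (eapply Rlt_le_trans; [apply Ht|]; eapply Rle_trans; [apply Rmin_l|apply Rmin_l]).
  assert (T1 : Rabs (t - t0) < d1) by (eapply Rlt_le_trans; [apply Ht|]; eapply Rle_trans; [apply Rmin_l|apply Rmin_r]).
  assert (T2 : Rabs (t - t0) < t0) by (eapply Rlt_le_trans; [apply Ht|]; eapply Rle_trans; [apply Rmin_r|apply Rmin_l]).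
  assert (U : Rabs (u - u0) < eps / 2 * m / INR n) by (eapply Rlt_le_trans; [apply Hu|]; eapply Rle_trans; [apply Rmin_r|apply Rmin_r]).
  assert (ht : 0 <= t) by (apply Rabs_lt_between' in T2; lra).
  replace (phi u t - phi u0 t0) with ((phi u t - phi u0 t) + (phi u0 t - phi u0 t0)) by ring.
  eapply Rle_lt_trans. apply Rabs_triang.
  assert (A := phi_lip u u0 t m ht (Hm t ht T0) hm).
  assert (INR n / m * Rabs (u - u0) < eps / 2).
  { apply Rmult_lt_reg_l with (m / INR n). apply Rdiv_lt_0_compat; auto.
    replace (m / INR n * (INR n / m * Rabs (u - u0))) with (Rabs (u - u0)) by (field; lra).
    replace (m / INR n * (eps / 2)) with (eps / 2 * m / INR n) by (field; lra). auto. }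
  assert (B := E1 t ht T1 u0). destruct eps; simpl in *. lra.
Qed.

Lemma phi_cont2 u t : 0 < t -> cont2 phi u t.
Proof. intros ht. unfold cont2. apply (continuity_2d_pt_filterlim phi u t). apply phi_cont2d; auto. Qed.

Definition omf x s := dt1 n1 x s * - n2 x s + dt1 n2 x s * n1 x s.

Definition Kex (c s : R) := Add (Mul (At n1) (Cst c)) (Mul (At n2) (Cst s)).

Lemma phi_contpt_t u t : 0 < t -> continuity_pt (fun s => phi u s) t.
Proof.
  intros ht eps Heps. destruct (phi_unif t ltac:(lra) eps Heps) as [d [Hd E]].
  exists (Rmin d t). split. apply Rmin_pos; auto.
  intros s [_ Hs]. simpl in *; unfold R_dist in *.
  assert (Rabs (s - t) < t) by (eapply Rlt_le_trans; [apply Hs|apply Rmin_r]).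
  apply E. apply Rabs_lt_between' in H; lra. eapply Rlt_le_trans; [apply Hs|apply Rmin_l].
Qed.

Lemma phi_deriv_t u t : 0 < t ->
  derivable_pt_lim (fun s => phi u s) t (- omf (phi u t) t / ellf (phi u t) t).
Proof.
  intros ht. set (C := cos (INR n * u)). set (S := sin (INR n * u)).
  assert (Hw : wf (Kex C S)) by (simpl; tauto).
  assert (HK := smooth_diff (ev (Kex C S)) (phi u t) t (smooth_ev _ Hw) ht).
  destruct (ev_props _ Hw (phi u t) t ht) as [A [B _]].
  replace (du1 (ev (Kex C S)) (phi u t) t) with (ev (dU (Kex C S)) (phi u t) t) in HK by (symmetry; apply is_derive_unique; exact A).
  replace (dt1 (ev (Kex C S)) (phi u t) t) with (ev (dT (Kex C S)) (phi u t) t) in HK by (symmetry; apply is_derive_unique; exact B).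
  simpl in HK.
  destruct (phi_nu u t ltac:(lra)) as [P1 P2]. fold S in P1. fold C in P2.
  assert (kx : du1 n1 (phi u t) t * C + n1 (phi u t) t * 0 + (du1 n2 (phi u t) t * S + n2 (phi u t) t * 0) = ellf (phi u t) t).
  { rewrite dn1_eq, dn2_eq by lra. rewrite P1, P2. assert (Z := sin2_cos2 (INR n * u)). unfold Rsqr in Z.
    fold S C in Z. set (L := ellf (phi u t) t).
    transitivity (L * (S * S + C * C)). ring. rewrite Z; ring. }
  assert (ky : dt1 n1 (phi u t) t * C + n1 (phi u t) t * 0 + (dt1 n2 (phi u t) t * S + n2 (phi u t) t * 0) = omf (phi u t) t).
  { unfold omf. rewrite P1, P2. fold C S. ring. }
  rewrite kx, ky in HK.
  apply (implicit_deriv (ev (Kex C S)) (fun s => phi u s) t); auto.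
  - apply Rgt_not_eq, Hpos; lra.
  - apply phi_contpt_t; auto.
  - apply filter_imp with (2 := locally_pos t ht). intros s hs. simpl.
    destruct (phi_nu u s ltac:(lra)) as [Q1 Q2]. rewrite P1, P2, Q1, Q2. unfold C, S. ring.
Qed.

Lemma smooth_ellf : smooth_pos ellf.
Proof.
  apply (smooth_ext (ev (Add (Mul (At (du1 n1)) (Mul (Cst (-1)) (At n2))) (Mul (At (du1 n2)) (At n1))))).
  apply smooth_ev. cbn [wf ev]. split; split.
  apply smooth_du; exact HS1. split. exact I. exact HS2. apply smooth_du; exact HS2. exact HS1.
  intros u t _. cbn [ev]. unfold ellf. ring.
Qed.

Lemma smooth_omf : smooth_pos omf.
Proof.
  apply (smooth_ext (ev (Add (Mul (At (dt1 n1)) (Mul (Cst (-1)) (At n2))) (Mul (At (dt1 n2)) (At n1))))).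
  apply smooth_ev. cbn [wf ev]. split; split.
  apply smooth_dt; exact HS1. split. exact I. exact HS2. apply smooth_dt; exact HS2. exact HS1.
  intros u t _. cbn [ev]. unfold omf. ring.
Qed.

Lemma smooth_proj : smooth_pos (fun x _ => x).
Proof.
  apply (smooth_class (fun h => (forall u t, 0 < t -> h u t = u) \/ exists c, forall u t, 0 < t -> h u t = c)).
  - intros h [H|[c H]] u t ht.
    + split; [|split].
      * apply ex_derive_ext with (fun s => s). intros; symmetry; apply H; auto. apply (ex_derive_id (K:=R_AbsRing)).
      * apply ex_derive_ext_loc with (fun _ => u). apply filter_imp with (2 := locally_pos t ht). intros; symmetry; apply H; auto.
        apply (ex_derive_const (K:=R_AbsRing) (V:=R_NormedModule)).
      * unfold cont2. apply continuous_ext_loc with (fun p : R * R => fst p).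
        apply filter_imp with (2 := locally2_pos u t ht). intros [a b]; simpl; intros; symmetry; apply H; auto.
        apply continuous_fst.
    + split; [|split].
      * apply ex_derive_ext with (fun _ => c). intros; symmetry; apply H; auto. apply (ex_derive_const (K:=R_AbsRing) (V:=R_NormedModule)).
      * apply ex_derive_ext_loc with (fun _ => c). apply filter_imp with (2 := locally_pos t ht). intros; symmetry; apply H; auto.
        apply (ex_derive_const (K:=R_AbsRing) (V:=R_NormedModule)).
      * unfold cont2. apply continuous_ext_loc with (fun p : R * R => c).
        apply filter_imp with (2 := locally2_pos u t ht). intros [a b]; simpl; intros; symmetry; apply H; auto.
        apply continuous_const.
  - intros h [H|[c H]]; right.
    + exists 1. intros u t ht. unfold du1. rewrite (Derive_ext _ (fun s => s)). apply Derive_id. intros; apply H; auto.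
    + exists 0. intros u t ht. unfold du1. rewrite (Derive_ext _ (fun _ => c)). apply Derive_const. intros; apply H; auto.
  - intros h [H|[c H]]; right.
    + exists 0. intros u t ht. unfold dt1. rewrite (Derive_ext_loc _ (fun _ => u)). apply Derive_const.
      apply filter_imp with (2 := locally_pos t ht). intros; apply H; auto.
    + exists 0. intros u t ht. unfold dt1. rewrite (Derive_ext_loc _ (fun _ => c)). apply Derive_const.
      apply filter_imp with (2 := locally_pos t ht). intros; apply H; auto.
  - left; auto.
Qed.

Lemma comp_u G u t : smooth_pos G -> 0 < t ->
  derivable_pt_lim (fun s => G (phi s t) t) u (du1 G (phi u t) t * (INR n / ellf (phi u t) t)).
Proof.
  intros HG ht.
  apply (derivable_pt_lim_comp (fun s => phi s t) (fun x => G x t)).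
  apply phi_deriv_u; lra. apply is_derive_Reals. apply Derive_correct. apply (HG nil _ t ht).
Qed.

Lemma comp_t G u t : smooth_pos G -> 0 < t ->
  derivable_pt_lim (fun s => G (phi u s) s) t
    (du1 G (phi u t) t * (- omf (phi u t) t / ellf (phi u t) t) + dt1 G (phi u t) t * 1).
Proof.
  intros HG ht.
  apply (derivable_pt_lim_comp_2d G (fun s => phi u s) (fun s => s)).
  apply smooth_diff; auto. apply phi_deriv_t; auto. apply derivable_pt_lim_id.
Qed.

Lemma smooth_phi : smooth_pos phi.
Proof.
  apply (smooth_class (fun h => exists G, smooth_pos G /\ forall u t, 0 < t -> h u t = G (phi u t) t)).
  - intros h [G [HG E]] u t ht. split; [|split].
    + apply ex_derive_ext with (fun s => G (phi s t) t). intros; symmetry; apply E; auto.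
      eexists. apply is_derive_Reals. apply comp_u; auto.
    + apply ex_derive_ext_loc with (fun s => G (phi u s) s).
      apply filter_imp with (2 := locally_pos t ht). intros; symmetry; apply E; auto.
      eexists. apply is_derive_Reals. apply comp_t; auto.
    + unfold cont2. apply continuous_ext_loc with (fun p : R * R => G (phi (fst p) (snd p)) (snd p)).
      apply filter_imp with (2 := locally2_pos u t ht). intros [a b]; simpl; intros; symmetry; apply E; auto.
      apply (continuous_comp_2 (fun p : R * R => phi (fst p) (snd p)) (fun p : R * R => snd p) G).
      apply phi_cont2; auto. apply continuous_snd. simpl. apply (HG nil (phi u t) t ht).
  - intros h [G [HG E]]. exists (ev (Mul (At (du1 G)) (Mul (Cst (INR n)) (Inv (At ellf))))). split.
    + apply smooth_ev. cbn [wf ev]. split. apply smooth_du; exact HG. split. exact I. split. apply smooth_ellf.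
      intros; apply Rgt_not_eq, Hpos; lra.
    + intros u t ht. unfold du1 at 1. rewrite (Derive_ext _ (fun s => G (phi s t) t)) by (intros; apply E; auto).
      rewrite (is_derive_unique _ _ _ (proj2 (is_derive_Reals _ _ _) (comp_u G u t HG ht))).
      cbn [ev]. unfold Rdiv. ring.
  - intros h [G [HG E]].
    exists (ev (Add (Mul (At (du1 G)) (Mul (Cst (-1)) (Mul (At omf) (Inv (At ellf))))) (At (dt1 G)))). split.
    + apply smooth_ev. cbn [wf ev]. split. split. apply smooth_du; exact HG. split. exact I. split. apply smooth_omf.
      split. apply smooth_ellf. intros; apply Rgt_not_eq, Hpos; lra. apply smooth_dt; exact HG.
    + intros u t ht. unfold dt1 at 1.
      transitivity (du1 G (phi u t) t * (- omf (phi u t) t / ellf (phi u t) t) + dt1 G (phi u t) t * 1).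
      { rewrite (Derive_ext_loc _ (fun s => G (phi u s) s)).
        apply is_derive_unique. apply is_derive_Reals. apply comp_t; auto.
        apply filter_imp with (2 := locally_pos t ht). intros; apply E; auto. }
      cbn [ev]. unfold Rdiv. ring.
  - exists (fun x _ => x). split. apply smooth_proj. auto.
Qed.

Lemma dphi u t : 0 <= t -> Derive (fun s => phi s t) u = INR n / ellf (phi u t) t.
Proof. intros ht. apply is_derive_unique. apply is_derive_Reals. apply phi_deriv_u; auto. Qed.

Lemma dphi_ne u t : 0 <= t -> Derive (fun s => phi s t) u <> 0.
Proof.
  intros ht. rewrite dphi by auto. assert (Hn := n_pos). assert (H := Hpos (phi u t) t ht).
  apply Rgt_not_eq. apply Rdiv_lt_0_compat; auto.
Qed.

Lemma phi_cont_u u t : 0 <= t -> continuous (fun s => phi s t) u.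
Proof.
  intros ht. apply (ex_derive_continuous (K:=R_AbsRing) (V:=R_NormedModule) (fun s => phi s t)).
  eexists. apply is_derive_Reals. apply phi_deriv_u; auto.
Qed.

Lemma phi_C1 t : 0 <= t -> Defs.C1 (fun u => phi u t).
Proof.
  intros ht. split.
  - intros u. eexists. apply is_derive_Reals. apply phi_deriv_u; auto.
  - intros u. apply (continuous_ext (fun s => INR n * / ellf (phi s t) t)).
    intros s. rewrite dphi by auto. auto.
    apply (continuous_mult (fun _ => INR n) (fun s => / ellf (phi s t) t)). apply continuous_const.
    apply (continuous_comp (fun s => ellf (phi s t) t) (fun x => / x)).
    apply (continuous_comp (fun s => phi s t) (fun x => ellf x t)). apply phi_cont_u; auto. apply cont_ell; auto.
    apply continuous_Rinv. apply Rgt_not_eq, Hpos; auto.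
Qed.

Lemma dphi_per u t : 0 <= t -> Derive (fun s => phi s t) (u + 2 * PI) = Derive (fun s => phi s t) u.
Proof. intros ht. rewrite !dphi, phi_per, ell_per by auto. auto. Qed.

Lemma phi_C0C1 : C0_C1 phi.
Proof.
  split. apply phi_C1.
  intros t0 ht0 eps Heps.
  destruct (ell_local_min t0 ht0) as [m [d0 [hm [hd0 Hm]]]].
  assert (Hn := n_pos).
  set (B := Rabs (phi 0 t0) + 2 * PI).
  set (e' := eps * (m * m) / (4 * INR n)).
  assert (He' : 0 < e') by (unfold e'; apply Rdiv_lt_0_compat; [apply Rmult_lt_0_compat; nra|lra]).
  destruct (Heine_cor2 (f := fun x => ellf x t0) (a := - (B + 1)) (b := B + 1)) with (eps := mkposreal _ He') as [dH HdH].
  { intros x _. apply contpt_ell; auto. }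
  destruct (phi_unif t0 ht0 (Rmin eps (Rmin 1 dH))) as [d1 [hd1 E1]].
  { apply Rmin_pos; auto. apply Rmin_pos. lra. destruct dH; simpl; auto. }
  destruct (ell_unif t0 ht0 e' He') as [d2 [hd2 E2]].
  exists (Rmin d0 (Rmin d1 d2)). split. repeat apply Rmin_pos; auto.
  intros t ht Htd.
  assert (T0 : Rabs (t - t0) < d0) by (eapply Rlt_le_trans; [apply Htd|apply Rmin_l]).
  assert (T1 : Rabs (t - t0) < d1) by (eapply Rlt_le_trans; [apply Htd|]; eapply Rle_trans; [apply Rmin_r|apply Rmin_l]).
  assert (T2 : Rabs (t - t0) < d2) by (eapply Rlt_le_trans; [apply Htd|]; eapply Rle_trans; [apply Rmin_r|apply Rmin_r]).
  assert (Hmt := Hm t ht T0).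
  assert (Hmt0 : forall x, m <= ellf x t0) by (apply Hm; auto; rewrite Rminus_eq_0, Rabs_R0; auto).
  intros u. split.
  - eapply Rlt_le_trans. apply E1; auto. apply Rmin_l.
  - assert (Hred : forall u, 0 <= u <= 2 * PI ->
      Rabs (Derive (fun s => phi s t) u - Derive (fun s => phi s t0) u) < eps).
    { intros v Hv. rewrite !dphi by auto.
      set (x := phi v t0). set (y := phi v t).
      assert (Hx : Rabs x <= B) by (apply phi_bound; auto).
      assert (Hxy : Rabs (y - x) < Rmin eps (Rmin 1 dH)) by (apply E1; auto).
      assert (Hxy1 : Rabs (y - x) < 1) by (eapply Rlt_le_trans; [apply Hxy|]; eapply Rle_trans; [apply Rmin_r|apply Rmin_l]).
      assert (Hxy2 : Rabs (y - x) < dH) by (eapply Rlt_le_trans; [apply Hxy|]; eapply Rle_trans; [apply Rmin_r|apply Rmin_r]).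
      assert (A1 : Rabs (ellf y t - ellf y t0) < e') by (apply E2; auto).
      assert (A2 : Rabs (ellf y t0 - ellf x t0) < e').
      { apply (HdH y x).
        apply Rabs_le_between in Hx. apply Rabs_lt_between' in Hxy1. lra.
        apply Rabs_le_between in Hx. lra. auto. }
      assert (A : Rabs (ellf y t - ellf x t0) < 2 * e').
      { replace (ellf y t - ellf x t0) with ((ellf y t - ellf y t0) + (ellf y t0 - ellf x t0)) by ring.
        eapply Rle_lt_trans. apply Rabs_triang. lra. }
      assert (P1 := Hmt y). assert (P2 := Hmt0 x).
      replace (INR n / ellf y t - INR n / ellf x t0) with (INR n * (ellf x t0 - ellf y t) / (ellf y t * ellf x t0)) by (field; lra).
      unfold Rdiv. rewrite Rabs_mult, Rabs_mult, Rabs_Rinv by nra.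
      rewrite (Rabs_right (INR n)) by lra. rewrite (Rabs_right (ellf y t * ellf x t0)) by nra.
      rewrite Rabs_minus_sym.
      apply Rle_lt_trans with (INR n * (2 * e') * / (m * m)).
      { apply Rmult_le_compat. apply Rmult_le_pos; [lra|apply Rabs_pos].
        left; apply Rinv_0_lt_compat; nra.
        apply Rmult_le_compat_l; lra. apply Rinv_le_contravar. nra. apply Rmult_le_compat; lra. }
      unfold e'. replace (INR n * (2 * (eps * (m * m) / (4 * INR n))) * / (m * m)) with (eps / 2) by (field; split; lra).
      lra. }
    destruct (periodic_reduce (fun u => Derive (fun s => phi s t) u - Derive (fun s => phi s t0) u)) with (x := u) as [y [Hy Ey]].
    { intros z. rewrite !dphi_per by auto. auto. }
    cbv beta in Ey. rewrite Ey. apply Hred; auto.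
Qed.

Variable alpha : R.
Hypothesis Halpha : 0 < alpha < 1.
Hypothesis Hh1 : C1alpha alpha (fun u => n1 u 0).
Hypothesis Hh2 : C1alpha alpha (fun u => n2 u 0).

Lemma hold_const_pos (f : R -> R) C : (forall u v, u <> v -> Rabs (Derive f u - Derive f v) <= C * Rpower (Rabs (u - v)) alpha) -> 0 <= C.
Proof.
  intros H. assert (K := H 0 1 ltac:(lra)). assert (P := rpow_pos (Rabs (0 - 1)) alpha).
  assert (Q := Rabs_pos (Derive f 0 - Derive f 1)). destruct (Rle_dec 0 C); auto. nra.
Qed.

Lemma n_lip (g : R -> R -> R) M : (forall x, ex_derive (fun s => g s 0) x) ->
  (forall x, Rabs (du1 g x 0) <= M) -> forall x y, Rabs (g x 0 - g y 0) <= M * Rabs (x - y).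
Proof.
  intros Hd HM x y. destruct (MVT_gen (fun s => g s 0) y x (fun s => du1 g s 0)) as [c [_ E]].
  intros; apply Derive_correct; auto.
  intros; apply continuity_pt_filterlim. apply (ex_derive_continuous (K:=R_AbsRing) (V:=R_NormedModule) (fun s => g s 0)). auto.
  simpl in E. rewrite E, Rabs_mult. apply Rmult_le_compat_r. apply Rabs_pos. auto.
Qed.

Lemma phi0_holder : C1alpha alpha (fun u => phi u 0).
Proof.
  split. apply phi_C1; lra.
  destruct Hh1 as [_ [Cn1 H1]]. destruct Hh2 as [_ [Cn2 H2]].
  assert (HC1p := hold_const_pos _ _ H1). assert (HC2p := hold_const_pos _ _ H2).
  destruct (ell_max 0 (Rle_refl 0)) as [Ml HMl].
  destruct (ell_min 0 (Rle_refl 0)) as [m [hm Hm]].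
  assert (HMl0 : 0 <= Ml) by (generalize (Hm 0) (HMl 0); lra).
  assert (Hn := n_pos).
  assert (Hd1 : forall x, Rabs (du1 n1 x 0) <= Ml).
  { intros x. rewrite dn1_eq, Rabs_mult, Rabs_Ropp, Rabs_right by (auto; try lra; left; apply Hpos; lra).
    generalize (n2_bound x 0 (Rle_refl 0)) (HMl x) (Hpos x 0 (Rle_refl 0)) (Rabs_pos (n2 x 0)). intros. nra. }
  assert (Hd2 : forall x, Rabs (du1 n2 x 0) <= Ml).
  { intros x. rewrite dn2_eq, Rabs_mult, Rabs_right by (auto; try lra; left; apply Hpos; lra).
    generalize (n1_bound x 0 (Rle_refl 0)) (HMl x) (Hpos x 0 (Rle_refl 0)) (Rabs_pos (n1 x 0)). intros. nra. }
  assert (L1 : forall x y, x <> y -> Rabs (n1 x 0 - n1 y 0) <= (Ml + 2) * Rpower (Rabs (x - y)) alpha).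
  { apply (holder_of_lip_bdd (fun x => n1 x 0)); try lra. apply n_lip; auto. intros; apply ex_n1; lra.
    intros x y. generalize (n1_bound x 0 (Rle_refl 0)) (n1_bound y 0 (Rle_refl 0)). intros.
    eapply Rle_trans. apply Rabs_triang. rewrite Rabs_Ropp. lra. }
  assert (L2 : forall x y, x <> y -> Rabs (n2 x 0 - n2 y 0) <= (Ml + 2) * Rpower (Rabs (x - y)) alpha).
  { apply (holder_of_lip_bdd (fun x => n2 x 0)); try lra. apply n_lip; auto. intros; apply ex_n2; lra.
    intros x y. generalize (n2_bound x 0 (Rle_refl 0)) (n2_bound y 0 (Rle_refl 0)). intros.
    eapply Rle_trans. apply Rabs_triang. rewrite Rabs_Ropp. lra. }
  set (Cl := Cn1 + Ml * (Ml + 2) + Cn2 + Ml * (Ml + 2)).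
  assert (Hl : forall x y, x <> y -> Rabs (ellf x 0 - ellf y 0) <= Cl * Rpower (Rabs (x - y)) alpha).
  { intros x y Hxy. set (p := Rpower (Rabs (x - y)) alpha).
    assert (Hp : 0 < p) by apply rpow_pos.
    assert (K1 := H1 x y Hxy). assert (K2 := H2 x y Hxy). fold p in K1, K2.
    change (Derive (fun u => n1 u 0) x) with (du1 n1 x 0) in K1.
    change (Derive (fun u => n1 u 0) y) with (du1 n1 y 0) in K1.
    change (Derive (fun u => n2 u 0) x) with (du1 n2 x 0) in K2.
    change (Derive (fun u => n2 u 0) y) with (du1 n2 y 0) in K2.
    assert (M1 := L1 x y Hxy). assert (M2 := L2 x y Hxy). fold p in M1, M2.
    unfold ellf.
    replace (du1 n1 x 0 * - n2 x 0 + du1 n2 x 0 * n1 x 0 - (du1 n1 y 0 * - n2 y 0 + du1 n2 y 0 * n1 y 0))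
      with ((du1 n1 x 0 - du1 n1 y 0) * - n2 x 0 + du1 n1 y 0 * - (n2 x 0 - n2 y 0)
            + ((du1 n2 x 0 - du1 n2 y 0) * n1 x 0 + du1 n2 y 0 * (n1 x 0 - n1 y 0))) by ring.
    assert (Q1 : Rabs ((du1 n1 x 0 - du1 n1 y 0) * - n2 x 0) <= Cn1 * p).
    { rewrite Rabs_mult, Rabs_Ropp. generalize (n2_bound x 0 (Rle_refl 0)) (Rabs_pos (n2 x 0)) (Rabs_pos (du1 n1 x 0 - du1 n1 y 0)). intros. nra. }
    assert (Q2 : Rabs (du1 n1 y 0 * - (n2 x 0 - n2 y 0)) <= Ml * ((Ml + 2) * p)).
    { rewrite Rabs_mult, Rabs_Ropp. apply Rmult_le_compat; try apply Rabs_pos; auto. }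
    assert (Q3 : Rabs ((du1 n2 x 0 - du1 n2 y 0) * n1 x 0) <= Cn2 * p).
    { rewrite Rabs_mult. generalize (n1_bound x 0 (Rle_refl 0)) (Rabs_pos (n1 x 0)) (Rabs_pos (du1 n2 x 0 - du1 n2 y 0)). intros. nra. }
    assert (Q4 : Rabs (du1 n2 y 0 * (n1 x 0 - n1 y 0)) <= Ml * ((Ml + 2) * p)).
    { rewrite Rabs_mult. apply Rmult_le_compat; try apply Rabs_pos; auto. }
    eapply Rle_trans. apply Rabs_triang. eapply Rle_trans. apply Rplus_le_compat; apply Rabs_triang.
    unfold Cl. nra. }
  assert (HCl : 0 <= Cl) by (unfold Cl; nra).
  exists (INR n / (m * m) * Cl * Rpower (INR n / m) alpha).
  intros u v Huv. rewrite !dphi by lra.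
  set (a := phi u 0). set (b := phi v 0).
  assert (Hab : a <> b).
  { intros E. apply Huv. assert (theta a 0 = theta b 0) by (rewrite E; auto).
    unfold a, b in H. rewrite !phi_spec in H by lra. apply Rmult_eq_reg_l with (INR n); lra. }
  assert (Pa := Hm a). assert (Pb := Hm b).
  replace (INR n / ellf a 0 - INR n / ellf b 0) with (INR n * (ellf b 0 - ellf a 0) / (ellf a 0 * ellf b 0)) by (field; lra).
  unfold Rdiv at 1. rewrite Rabs_mult, Rabs_mult, Rabs_Rinv by nra.
  rewrite (Rabs_right (INR n)) by lra. rewrite (Rabs_right (ellf a 0 * ellf b 0)) by nra.
  assert (Hl' := Hl b a (fun E => Hab (eq_sym E))). rewrite Rabs_minus_sym in Hl'. rewrite (Rabs_minus_sym b a) in Hl'.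
  assert (Hlip : Rabs (a - b) <= INR n / m * Rabs (u - v)) by (apply phi_lip; auto; lra).
  assert (Hab' : 0 < Rabs (a - b)) by (apply Rabs_pos_lt; lra).
  assert (Hpw : Rpower (Rabs (a - b)) alpha <= Rpower (INR n / m) alpha * Rpower (Rabs (u - v)) alpha).
  { rewrite Rpower_mult_distr. apply Rle_Rpower_l. lra. split; auto.
    apply Rdiv_lt_0_compat; auto. apply Rabs_pos_lt; lra. }
  assert (P1 : / (ellf a 0 * ellf b 0) <= / (m * m)).
  { apply Rinv_le_contravar. nra. apply Rmult_le_compat; lra. }
  assert (P2 : 0 <= Rabs (ellf a 0 - ellf b 0)) by apply Rabs_pos.
  assert (P3 : 0 < / (m * m)) by (apply Rinv_0_lt_compat; nra).
  assert (P4 : 0 < / (ellf a 0 * ellf b 0)) by (apply Rinv_0_lt_compat; nra).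
  assert (P5 : 0 < Rpower (INR n / m) alpha) by apply rpow_pos.
  assert (P6 : 0 < Rpower (Rabs (u - v)) alpha) by apply rpow_pos.
  apply Rle_trans with (INR n * (Cl * Rpower (Rabs (a - b)) alpha) * / (m * m)).
  { apply Rmult_le_compat. apply Rmult_le_pos; [lra|apply Rabs_pos]. left; exact P4. apply Rmult_le_compat_l. lra. rewrite Rabs_minus_sym; exact Hl'. auto. }
  unfold Rdiv. replace (INR n * / (m * m) * Cl * Rpower (INR n * / m) alpha * Rpower (Rabs (u - v)) alpha)
    with (INR n * (Cl * (Rpower (INR n * / m) alpha * Rpower (Rabs (u - v)) alpha)) * / (m * m)) by ring.
  apply Rmult_le_compat_r; [lra|]. apply Rmult_le_compat_l; [lra|]. apply Rmult_le_compat_l; auto.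
Qed.

End Lift.


Ltac feed K := repeat match type of K with
 | ?A -> _ => let H := fresh in assert (H : A) by assumption; specialize (K H); clear H
 end.

Section Final.
Variable nu X : R -> R -> R * R.
Variable F : R -> R -> R.
Hypothesis Hper : forall u t, 0 <= t -> nu (u + 2 * PI) t = nu u t.
Hypothesis HC1 : C0_C1 (n1 nu).
Hypothesis HC2 : C0_C1 (n2 nu).
Hypothesis HS1 : smooth_pos (n1 nu).
Hypothesis HS2 : smooth_pos (n2 nu).
Hypothesis Hunit : forall u t, 0 <= t -> n1 nu u t * n1 nu u t + n2 nu u t * n2 nu u t = 1.
Hypothesis Hpos : forall u t, 0 <= t -> 0 < ellf nu u t.

Definition X1 u t := fst (X u t).
Definition X2 u t := snd (X u t).
Hypothesis HX1 : smooth_pos X1.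
Hypothesis HX2 : smooth_pos X2.
Hypothesis Hleg : forall a b, 0 <= b -> du1 X1 a b * n1 nu a b + du1 X2 a b * n2 nu a b = 0.
Definition betaf a b := du1 X1 a b * - n2 nu a b + du1 X2 a b * n1 nu a b.
Definition Tf a b := dt1 X1 a b * - n2 nu a b + dt1 X2 a b * n1 nu a b.
Hypothesis HN : forall a b, 0 < b -> dt1 X1 a b * n1 nu a b + dt1 X2 a b * n2 nu a b = betaf a b / ellf nu a b.
Hypothesis HT : forall a b, 0 < b -> Tf a b = Derive (fun s => betaf s b) a / (ellf nu a b) ^ 2 + F a b * betaf a b.

Lemma ed (f : R -> R -> R) l x t : smooth_pos f -> 0 < t ->
  is_derive (fun s => dpart l f s t) x (Derive (fun s => dpart l f s t) x) /\
  is_derive (fun s => dpart l f x s) t (Derive (fun s => dpart l f x s) t).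
Proof. intros H ht. destruct (H l x t ht) as [A [B _]]. split; apply Derive_correct; auto. Qed.

Lemma schwarz_eq (f : R -> R -> R) x t : smooth_pos f -> 0 < t -> du1 (dt1 f) x t = dt1 (du1 f) x t.
Proof.
  intros H ht. unfold du1, dt1. apply Schwarz.
  - exists (mkposreal t ht). intros a b _ Hb. simpl in Hb. assert (0 < b) by (apply Rabs_lt_between' in Hb; lra).
    destruct (H nil a b H0) as [A1 [A2 _]]. destruct (H (false :: nil) a b H0) as [B1 _].
    destruct (H (true :: nil) a b H0) as [_ [C2 _]]. simpl in *. auto.
  - apply cont2_2d. apply (H (true :: false :: nil) x t ht).
  - apply cont2_2d. apply (H (false :: true :: nil) x t ht).
Qed.

Lemma smooth_betaf : smooth_pos betaf.
Proof.
  apply (smooth_ext (ev (Add (Mul (At (du1 X1)) (Mul (Cst (-1)) (At (n2 nu)))) (Mul (At (du1 X2)) (At (n1 nu)))))).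
  apply smooth_ev. cbn [wf ev]. split; split.
  apply smooth_du; exact HX1. split. exact I. exact HS2. apply smooth_du; exact HX2. exact HS1.
  intros u t _. cbn [ev]. unfold betaf. ring.
Qed.

Lemma omega_rel x t : 0 < t ->
  betaf x t * omf nu x t = Tf x t * ellf nu x t - Derive (fun a => betaf a t / ellf nu a t) x.
Proof.
  intros ht.
  (* (i) time derivative of the Legendre condition *)
  assert (I1 : dt1 (du1 X1) x t * n1 nu x t + du1 X1 x t * dt1 (n1 nu) x t
             + (dt1 (du1 X2) x t * n2 nu x t + du1 X2 x t * dt1 (n2 nu) x t) = 0).
  { assert (D : is_derive (fun s => du1 X1 x s * n1 nu x s + du1 X2 x s * n2 nu x s) t
      (dt1 (du1 X1) x t * n1 nu x t + du1 X1 x t * dt1 (n1 nu) x t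
             + (dt1 (du1 X2) x t * n2 nu x t + du1 X2 x t * dt1 (n2 nu) x t))).
    { apply is_derive_Reals.
      apply (derivable_pt_lim_plus (fun s => du1 X1 x s * n1 nu x s) (fun s => du1 X2 x s * n2 nu x s));
      apply derivable_pt_lim_mult; apply is_derive_Reals.
      apply (ed X1 (true :: nil) x t HX1 ht). apply (ed (n1 nu) nil x t HS1 ht).
      apply (ed X2 (true :: nil) x t HX2 ht). apply (ed (n2 nu) nil x t HS2 ht). }
    assert (D0 : is_derive (fun s => du1 X1 x s * n1 nu x s + du1 X2 x s * n2 nu x s) t 0).
    { apply is_derive_ext_loc with (fun _ => 0).
      apply filter_imp with (2 := locally_pos t ht). intros s hs. symmetry. apply Hleg. lra.
      apply (is_derive_const (K:=R_AbsRing) (V:=R_NormedModule)). }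
    rewrite (is_derive_unique _ _ _ D0) in D || idtac.
    assert (U := is_derive_unique _ _ _ D). rewrite (is_derive_unique _ _ _ D0) in U. auto. }
  (* (ii) space derivative of the normal velocity *)
  assert (I2 : du1 (dt1 X1) x t * n1 nu x t + dt1 X1 x t * du1 (n1 nu) x t
             + (du1 (dt1 X2) x t * n2 nu x t + dt1 X2 x t * du1 (n2 nu) x t)
             = Derive (fun a => betaf a t / ellf nu a t) x).
  { assert (D : is_derive (fun a => dt1 X1 a t * n1 nu a t + dt1 X2 a t * n2 nu a t) x
      (du1 (dt1 X1) x t * n1 nu x t + dt1 X1 x t * du1 (n1 nu) x t
             + (du1 (dt1 X2) x t * n2 nu x t + dt1 X2 x t * du1 (n2 nu) x t))).
    { apply is_derive_Reals.
      apply (derivable_pt_lim_plus (fun a => dt1 X1 a t * n1 nu a t) (fun a => dt1 X2 a t * n2 nu a t)).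
      apply (derivable_pt_lim_mult (fun a => dt1 X1 a t) (fun a => n1 nu a t)); apply is_derive_Reals.
      apply (proj1 (ed X1 (false :: nil) x t HX1 ht)). apply (proj1 (ed (n1 nu) nil x t HS1 ht)).
      apply (derivable_pt_lim_mult (fun a => dt1 X2 a t) (fun a => n2 nu a t)); apply is_derive_Reals.
      apply (proj1 (ed X2 (false :: nil) x t HX2 ht)). apply (proj1 (ed (n2 nu) nil x t HS2 ht)). }
    rewrite <- (is_derive_unique _ _ _ D). apply Derive_ext. intros a. apply HN; auto. }
  rewrite (schwarz_eq X1 x t HX1 ht), (schwarz_eq X2 x t HX2 ht) in I2.
  rewrite (dn1_eq nu) in I2 by (auto; lra). rewrite (dn2_eq nu) in I2 by (auto; lra).
  destruct (unit_decomp (n1 nu x t) (n2 nu x t) (du1 X1 x t) (du1 X2 x t)) as [V1 V2].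
  apply Hunit; lra. apply Hleg; lra.
  fold (betaf x t) in V1, V2. rewrite V1, V2 in I1.
  unfold omf, Tf. rewrite <- I2. lra.
Qed.

Lemma final_id u t : 0 < t ->
  let Xt := fun u t => X (phi nu u t) t in
  let nut := fun u t => nu (phi nu u t) t in
  dt Xt u t =
    vadd (vscal (beta Xt nut u t / ell Xt nut u t) (nut u t))
         (vscal (Derive (fun s => beta Xt nut s t) u / (ell Xt nut u t) ^ 2) (Jrot (nut u t))).
Proof.
  intros ht Xt nut.
  pose proof (phi_deriv_t nu) as PT. feed PT.
  pose proof (phi_deriv_u nu) as PU. feed PU.
  pose proof (phi_nu nu) as PN. feed PN.
  set (N := INR (n nu)).
  assert (HNp : 0 < N) by (unfold N; apply (n_pos nu); assumption).
  assert (Enut : forall s, nut s t = (sin (N * s), - cos (N * s))).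
  { intros s. unfold nut. destruct (PN s t ltac:(lra)) as [A B]. unfold n1, n2 in A, B.
    rewrite (surjective_pairing (nu (phi nu s t) t)). rewrite A, B. auto. }
  assert (Edu_nut : du nut u t = (N * cos (N * u), N * sin (N * u))).
  { unfold du. f_equal.
    - rewrite (Derive_ext _ (fun s => sin (N * s))) by (intros; rewrite Enut; auto).
      apply is_derive_unique. auto_derive; auto. ring.
    - rewrite (Derive_ext _ (fun s => - cos (N * s))) by (intros; rewrite Enut; auto).
      apply is_derive_unique. auto_derive; auto. ring. }
  assert (Eell : ell Xt nut u t = N).
  { unfold ell. rewrite Edu_nut, Enut. unfold dot, Jrot; simpl.
    assert (Z := sin2_cos2 (N * u)). unfold Rsqr in Z.
    transitivity (N * (sin (N * u) * sin (N * u) + cos (N * u) * cos (N * u))). ring. rewrite Z; ring. }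
  assert (Ebeta : forall s, beta Xt nut s t = N / ellf nu (phi nu s t) t * betaf (phi nu s t) t).
  { intros s. unfold beta, du, dot, Jrot.
    assert (D1 : Derive (fun r => fst (Xt r t)) s = du1 X1 (phi nu s t) t * (N / ellf nu (phi nu s t) t)).
    { apply is_derive_unique. apply is_derive_Reals.
      apply (derivable_pt_lim_comp (fun r => phi nu r t) (fun a => X1 a t)). apply PU; lra.
      apply is_derive_Reals. apply (proj1 (ed X1 nil _ t HX1 ht)). }
    assert (D2 : Derive (fun r => snd (Xt r t)) s = du1 X2 (phi nu s t) t * (N / ellf nu (phi nu s t) t)).
    { apply is_derive_unique. apply is_derive_Reals.
      apply (derivable_pt_lim_comp (fun r => phi nu r t) (fun a => X2 a t)). apply PU; lra.
      apply is_derive_Reals. apply (proj1 (ed X2 nil _ t HX2 ht)). }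
    simpl. rewrite D1, D2. unfold nut. unfold betaf, n1, n2. ring. }
  set (x := phi nu u t).
  set (L := ellf nu x t).
  assert (HL : 0 < L) by (apply Hpos; lra).
  set (B := betaf x t).
  set (dB := Derive (fun a => betaf a t) x).
  set (dL := Derive (fun a => ellf nu a t) x).
  assert (HdB : is_derive (fun a => betaf a t) x dB) by (apply Derive_correct; apply (smooth_betaf nil x t ht)).
  assert (HdL : is_derive (fun a => ellf nu a t) x dL).
  { apply Derive_correct. pose proof (smooth_ellf nu) as K. feed K. apply (K nil x t ht). }
  assert (EdB : Derive (fun s => beta Xt nut s t) u = N / L * ((N * (dB * L - B * dL)) / L ^ 2)).
  { rewrite (Derive_ext _ (fun s => (fun a => N / ellf nu a t * betaf a t) (phi nu s t))) by (intros; rewrite Ebeta; auto).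
    apply is_derive_unique. apply is_derive_Reals.
    replace (N / L * ((N * (dB * L - B * dL)) / L ^ 2)) with (((N * (dB * L - B * dL)) / L ^ 2) * (N / L)) by ring.
    apply (derivable_pt_lim_comp (fun s => phi nu s t) (fun a => N / ellf nu a t * betaf a t)).
    apply PU; lra.
    apply is_derive_Reals.
    assert (K : is_derive (fun a => N * betaf a t / ellf nu a t) x ((N * dB * L - N * B * dL) / L ^ 2)).
    { apply (is_derive_div (fun a => N * betaf a t) (fun a => ellf nu a t)); auto.
      apply is_derive_Reals. apply is_derive_Reals in HdB.
      replace (N * dB) with (0 * B + N * dB) by ring.
      apply (derivable_pt_lim_mult (fun _ => N) (fun a => betaf a t)). apply derivable_pt_lim_const. auto.
      apply Rgt_not_eq; exact HL. }
    eapply is_derive_ext; [|replace ((N * (dB * L - B * dL)) / L ^ 2) with ((N * dB * L - N * B * dL) / L ^ 2) by (field; lra); exact K].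
    intros a. simpl. field. apply Rgt_not_eq, Hpos. lra. }
  assert (D3 : Derive (fun s => fst (Xt u s)) t = du1 X1 x t * (- omf nu x t / L) + dt1 X1 x t * 1).
  { apply is_derive_unique; apply is_derive_Reals.
    apply (derivable_pt_lim_comp_2d X1 (fun s => phi nu u s) (fun s => s)).
    apply smooth_diff; auto. apply PT; auto. apply derivable_pt_lim_id. }
  assert (D4 : Derive (fun s => snd (Xt u s)) t = du1 X2 x t * (- omf nu x t / L) + dt1 X2 x t * 1).
  { apply is_derive_unique; apply is_derive_Reals.
    apply (derivable_pt_lim_comp_2d X2 (fun s => phi nu u s) (fun s => s)).
    apply smooth_diff; auto. apply PT; auto. apply derivable_pt_lim_id. }
  set (Q := Derive (fun a => betaf a t / ellf nu a t) x).
  assert (EQ : Q = (dB * L - B * dL) / L ^ 2).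
  { apply is_derive_unique. apply (is_derive_div (fun a => betaf a t) (fun a => ellf nu a t)); auto. apply Rgt_not_eq; exact HL. }
  assert (Om := omega_rel x t ht). fold B L Q in Om.
  assert (Nx := HN x t ht). fold B L in Nx.
  destruct (unit_decomp (n1 nu x t) (n2 nu x t) (du1 X1 x t) (du1 X2 x t)) as [V1 V2].
  apply Hunit; lra. apply Hleg; lra. fold (betaf x t) B in V1, V2.
  assert (U := Hunit x t ltac:(lra)).
  set (a1 := n1 nu x t) in *. set (a2 := n2 nu x t) in *.
  assert (W1 : dt1 X1 x t = a1 * (B / L) - a2 * Tf x t).
  { unfold Tf. fold a1 a2. rewrite <- Nx.
    transitivity (dt1 X1 x t * (a1 * a1 + a2 * a2)). rewrite U; ring. ring. }
  assert (W2 : dt1 X2 x t = a2 * (B / L) + a1 * Tf x t).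
  { unfold Tf. fold a1 a2. rewrite <- Nx.
    transitivity (dt1 X2 x t * (a1 * a1 + a2 * a2)). rewrite U; ring. ring. }
  unfold dt, vadd, vscal, Jrot. rewrite D3, D4, Eell, EdB, (Ebeta u).
  change (phi nu u t) with x. fold L B.
  change (fst (nut u t)) with a1. change (snd (nut u t)) with a2.
  rewrite V1, V2, W1, W2.
  rewrite EQ in Om.
  assert (HN0 : N <> 0) by lra. assert (HL0 : L <> 0) by lra.
  f_equal; cbn [fst snd].
  - transitivity (N / L * B / N * a1 + N / L * (N * ((dB * L - B * dL) / L ^ 2)) / N ^ 2 * - a2
       + a2 / L * (B * omf nu x t - (Tf x t * L - (dB * L - B * dL) / L ^ 2))).
    field; auto. rewrite Om. field; auto.
  - transitivity (N / L * B / N * a2 + N / L * (N * ((dB * L - B * dL) / L ^ 2)) / N ^ 2 * a1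
       - a1 / L * (B * omf nu x t - (Tf x t * L - (dB * L - B * dL) / L ^ 2))).
    field; auto. rewrite Om. field; auto.
Qed.
End Final.

Theorem proposition3p2 (alpha : R) (F : R -> R -> R)
  (X nu : R -> R -> R * R) (X0 nu0 : R -> R * R) :
  0 < alpha < 1 ->
  periodic2 F -> smooth_pos F ->
  flow_regular X nu ->
  (forall u, X u 0 = X0 u /\ nu u 0 = nu0 u) ->
  C1alphaV alpha X0 -> C1alphaV alpha nu0 ->
  (forall u, 0 < ell X nu u 0) ->
  inverse_curvature_flow X nu ->
  (forall u t, 0 < t ->
     tang_vel X nu u t =
       Derive (fun s => beta X nu s t) u / (ell X nu u t) ^ 2
       + F u t * beta X nu u t) ->
  exists (n : nat) (phi : R -> R -> R) (d : R),
    (d = 1 \/ d = -1) /\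
    (* phi(.,t) lifts a map of S^1_{2pi} of degree d = +-1 *)
    (forall u t, 0 <= t -> phi (u + 2 * PI) t = phi u t + 2 * PI * d) /\
    C0_C1 phi /\ smooth_pos phi /\
    (* each phi(.,t) is a diffeomorphism of S^1_{2pi} *)
    (forall u t, 0 <= t -> Derive (fun s => phi s t) u <> 0) /\
    C1alpha alpha (fun u => phi u 0) /\
    let Xt := fun u t => X (phi u t) t in
    let nut := fun u t => nu (phi u t) t in
    (forall u, nut u 0 = (sin (INR n * u), - cos (INR n * u))) /\
    (forall u t, 0 < t ->
       dt Xt u t =
         vadd (vscal (beta Xt nut u t / ell Xt nut u t) (nut u t))
              (vscal (Derive (fun s => beta Xt nut s t) u / (ell Xt nut u t) ^ 2)
                     (Jrot (nut u t)))).
Proof.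
  intros Ha HFp HFs Hreg H0 HX0 Hnu0 Hell0 Hicf HTv.
  destruct Hreg as [HpX [Hper [[HCX1 HCX2] [[HC1 HC2] [[HSX1 HSX2] [HS1 HS2]]]]]].
  destruct Hicf as [Hlegf [Hellp HNv]].
  assert (HC1' : C0_C1 (n1 nu)) by exact HC1.
  assert (HC2' : C0_C1 (n2 nu)) by exact HC2.
  assert (HS1' : smooth_pos (n1 nu)) by exact HS1.
  assert (HS2' : smooth_pos (n2 nu)) by exact HS2.
  assert (Hunit : forall u t, 0 <= t -> n1 nu u t * n1 nu u t + n2 nu u t * n2 nu u t = 1).
  { intros u t ht. destruct (Hlegf u t ht) as [A _]. exact A. }
  assert (Hpos : forall u t, 0 <= t -> 0 < ellf nu u t).
  { intros u t ht. destruct (Req_dec t 0) as [->|Ne]. exact (Hell0 u). exact (Hellp u t ltac:(lra)). }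
  assert (Hh1 : C1alpha alpha (fun u => n1 nu u 0)).
  { replace (fun u => n1 nu u 0) with (fun u => fst (nu0 u)). exact (proj1 Hnu0).
    apply functional_extensionality. intros u. unfold n1. rewrite (proj2 (H0 u)). auto. }
  assert (Hh2 : C1alpha alpha (fun u => n2 nu u 0)).
  { replace (fun u => n2 nu u 0) with (fun u => snd (nu0 u)). exact (proj2 Hnu0).
    apply functional_extensionality. intros u. unfold n2. rewrite (proj2 (H0 u)). auto. }
  assert (HX1 : smooth_pos (X1 X)) by exact HSX1.
  assert (HX2 : smooth_pos (X2 X)) by exact HSX2.
  assert (Hleg : forall a b, 0 <= b -> du1 (X1 X) a b * n1 nu a b + du1 (X2 X) a b * n2 nu a b = 0).
  { intros a b hb. destruct (Hlegf a b hb) as [_ A]. exact A. }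
  assert (HN : forall a b, 0 < b -> dt1 (X1 X) a b * n1 nu a b + dt1 (X2 X) a b * n2 nu a b = betaf nu X a b / ellf nu a b).
  { intros a b hb. exact (HNv a b hb). }
  assert (HT : forall a b, 0 < b -> Tf nu X a b = Derive (fun s => betaf nu X s b) a / (ellf nu a b) ^ 2 + F a b * betaf nu X a b).
  { intros a b hb. exact (HTv a b hb). }
  exists (n nu), (phi nu), 1.
  split; [left; reflexivity|].
  split. { intros u t ht. pose proof (phi_per nu) as K. feed K. rewrite K by auto. ring. }
  split. { pose proof (phi_C0C1 nu) as K. feed K. exact K. }
  split. { pose proof (smooth_phi nu) as K. feed K. exact K. }
  split. { intros u t ht. pose proof (dphi_ne nu) as K. feed K. apply K; auto. }
  split. { pose proof (phi0_holder nu) as K. feed K. exact (K alpha Ha Hh1 Hh2). }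
  cbv zeta. split.
  - intros u. pose proof (phi_nu nu) as K. feed K. destruct (K u 0 (Rle_refl 0)) as [A B].
    unfold n1, n2 in A, B. rewrite (surjective_pairing (nu (phi nu u 0) 0)), A, B. auto.
  - intros u t ht. pose proof (final_id nu X) as K. feed K. exact (K u t ht).
Qed.
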